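(* Let $\lambda_1\in\mathrm{Dyck}(2n_1)$, $\lambda_2\in\mathrm{Dyck}(2n_2)$, $\lambda=\lambda_1*\lambda_2$, let $a,b,i\ge0$ be integers, $\mu_1\in L(\lambda_1;a,i)$, $\mu_2\in L(\lambda_2;i,b)$ and $\mu=\mu_1*\mu_2$ (so $\mu\in L(\lambda;a,b)$). Then there is a bijection $\phi:\mathcal{TD}(\lambda/\mu)\to \mathcal{TD}(\lambda_1/\mu_1)\times\mathcal{TD}(\lambda_2/\mu_2)$ such that if $\phi(T)=(T_1,T_2)$ then $\|T\|=\|T_1\|+\|T_2\|$.
   Context: A Dyck path of length $2n$ is a lattice path from $(0,0)$ to $(n,n)$ with up steps $(0,1)$ and down steps $(1,0)$ never going below $y=x$; $\mathrm{Dyck}(2n)$ is their set. For lattice paths $\nu,\rho$, $\nu*\rho$ is the path obtained by translating $\rho$ so that its starting point is the endpoint of $\nu$ and concatenating. For $\lambda\in\mathrm{Dyck}(2n)$ and integers $a,b\ge0$, let $O=(0,0)$, $N=(n,n)$, $A=O+(-a,a)$, $B=N+(-b,b)$, and $L(\lambda;a,b)$ the set of lattice paths with steps $(0,1),(1,0)$ from $A$ to $B$ never going below $\lambda$. For $\mu\in L(\lambda;a,b)$, $\lambda/\mu$ is the region bounded by $\lambda$, $\mu$ and the segments $OA$, $NB$. A Dyck tile is an edge-connected set of unit cells with no $2\times2$ block whose cell centers, joined by unit up/right moves, form a translated Dyck path; its length is the length of that path. A truncated Dyck tile is obtained from a Dyck tile of positive length by cutting its northeast and southwest cells along their diagonals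 of slope $-1$ and removing the northeast half of the northeast cell and the southwest half of the southwest cell; its half-length is half the length of the original Dyck tile. A truncated Dyck tiling of $\lambda/\mu$ is a set $T$ of truncated Dyck tiles with disjoint interiors contained in $\lambda/\mu$ such that (i) for each $\eta\in T$, if $(\eta+(1,-1))\cap\lambda/\mu$ has nonempty interior then another tile of $T$ contains $\eta+(1,-1)$, and (ii) no two tiles share a border segment of slope $-1$. $\mathcal{TD}(\lambda/\mu)$ is their set; $\|T\|$ is the sum of the half-lengths of the tiles of $T$. *)

(* Defs.v *)
From HB Require Import structures.
From mathcomp Require Import all_boot all_order all_algebra.
Set Implicit Arguments. Unset Strict Implicit. Unset Printing Implicit Defensive.
Import Order.TTheory GRing.Theory Num.Theory.
Local Open Scope ring_scope.

(* Lattice paths are encoded by their step sequences:                  *)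
(*   true  = up step    (0,1)                                          *)
(*   false = right step (1,0)                                          *)

Definition ups (p : seq bool) (k : nat) : nat := count id (take k p).
Definition rts (p : seq bool) (k : nat) : nat := count negb (take k p).

(* "height" y - x of the k-th point of p, relative to its starting point *)
Definition hgt (p : seq bool) (k : nat) : int := (ups p k)%:Z - (rts p k)%:Z.

Definition is_dyck (n : nat) (p : seq bool) : Prop :=
  size p = (2 * n)%N /\
  (forall k, (k <= size p)%N -> (rts p k <= ups p k)%N) /\
  ups p (size p) = rts p (size p).

(* mu \in L(lam; a, b): a lattice path from A = (-a,a) to
   B = N + (-b,b) (N = (n,n) the endpoint of lam, size lam = 2n) never going
   below lam.  A path from A to B has exactly 2n steps; its k-th point is
   A + (rts mu k, ups mu k), which lies on the same anti-diagonal x + y = k as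
   the k-th point of lam; "not below lam" means y - x is at least that of lam. *)
Definition inL (lam : seq bool) (a b : nat) (mu : seq bool) : Prop :=
  size mu = size lam /\
  (forall k, (k <= size lam)%N -> hgt lam k <= (2 * a)%:Z + hgt mu k) /\
  (2 * a)%:Z + hgt mu (size lam) = (2 * b)%:Z.

Definition pt_in (lam mu : seq bool) (a : nat) (X Y : int) : bool :=
  let t := X + Y in let h := Y - X in
  [&& 0 <= t, t <= (size lam)%:Z,
      hgt lam (absz t) <= h & h <= (2 * a)%:Z + hgt mu (absz t)].

(* Half cells: the unit cell with lower-left corner (x,y) is cut along its
   diagonal of slope -1 into a southwest half (false) and a northeast half
   (true).  All regions and tiles considered are unions of half cells, so
   we identify them with their sets of half cells (interiors are disjoint
   iff no common half cell, containment iff inclusion of half cell sets). *)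
Definition halfcell := ((int * int) * bool)%type.

Definition hc_corners (c : halfcell) : seq (int * int) :=
  let: ((x, y), ne) := c in
  if ne then [:: (x + 1, y); (x, y + 1); (x + 1, y + 1)]
        else [:: (x, y); (x + 1, y); (x, y + 1)].

(* a (closed) triangle lies in lam/mu iff its three vertices do, since
   lam/mu is convex inside each strip k <= x + y <= k+1 *)
Definition hc_in (lam mu : seq bool) (a : nat) (c : halfcell) : bool :=
  all (fun P => pt_in lam mu a P.1 P.2) (hc_corners c).

(* Truncated Dyck tiles.  A tile is given by ((x0,y0), w): its cells   *)
(* have lower-left corners (x0,y0) + (#right steps, #up steps) of the  *)
(* prefixes of w; the cell centers then follow the path w.             *)
Definition tile := ((int * int) * seq bool)%type.

Definition dyck_word (w : seq bool) : bool :=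
  all (fun k => rts w k <= ups w k)%N (iota 0 (size w).+1) &&
  (ups w (size w) == rts w (size w)).

(* truncated Dyck tiles come from Dyck tiles of positive length *)
Definition valid_tile (e : tile) : bool := (0 < size e.2)%N && dyck_word e.2.

Definition tcell (e : tile) (k : nat) : int * int :=
  (e.1.1 + (rts e.2 k)%:Z, e.1.2 + (ups e.2 k)%:Z).

Definition thalf (e : tile) : seq halfcell :=
  (tcell e 0, true) ::
  flatten [seq [:: (tcell e k, false); (tcell e k, true)] | k <- iota 1 (size e.2).-1]
  ++ [:: (tcell e (size e.2), false)].

Definition half_length (e : tile) : nat := (size e.2 %/ 2)%N.

Definition shift_tile (e : tile) : tile := ((e.1.1 + 1, e.1.2 - 1), e.2).

(* border segments of slope -1 of a truncated tile: the cut diagonals of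
   its first and last cells, from (x+1,y) to (x,y+1) *)
Definition diags (e : tile) : seq ((int * int) * (int * int)) :=
  [seq ((c.1 + 1, c.2), (c.1, c.2 + 1)) | c <- [:: tcell e 0; tcell e (size e.2)]].

(* A finite set of tiles is represented canonically by the list of its
   elements, strictly increasing for the (injective) encoding pickle. *)
Definition canonical_set (T : seq tile) : bool :=
  sorted (fun e f : tile => (pickle e < pickle f)%N) T.

Definition is_tdtiling (lam : seq bool) (a : nat) (mu : seq bool) (T : seq tile) : Prop :=
  canonical_set T /\
  (forall e, e \in T -> valid_tile e) /\
  (forall e, e \in T -> all (hc_in lam mu a) (thalf e)) /\
  (forall e f, e \in T -> f \in T -> e != f ->
     ~~ has (fun c => c \in thalf f) (thalf e)) /\
  (forall e, e \in T -> has (hc_in lam mu a) (thalf (shift_tile e)) ->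
     exists2 f, f \in T &
       (f != e) && all (fun c => c \in thalf f) (thalf (shift_tile e))) /\
  (forall e f, e \in T -> f \in T -> e != f ->
     ~~ has (fun d => d \in diags f) (diags e)).

Definition TD (lam : seq bool) (a : nat) (mu : seq bool) : Type :=
  {T : seq tile | is_tdtiling lam a mu T}.

Definition tnorm (T : seq tile) : nat := sumn [seq half_length e | e <- T].

(* Main.v *)
Require Import Defs.
From HB Require Import structures.
From mathcomp Require Import all_boot all_order all_algebra.
From mathcomp Require Import zify.
From Stdlib Require Import ProofIrrelevance.

Module P1.
Set Implicit Arguments. Unset Strict Implicit. Unset Printing Implicit Defensive.
Import Order.TTheory GRing.Theory Num.Theory.

Definition plt (e f : tile) := (pickle e < pickle f)%N.
Definition ple (e f : tile) := (pickle e <= pickle f)%N.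
Definition csort (T : seq tile) : seq tile := sort ple (undup T).

Lemma csort_mem T : csort T =i T.
Proof. by move=> x; rewrite mem_sort mem_undup. Qed.

Lemma canonical_csort T : canonical_set (csort T).
Proof.
rewrite /canonical_set.
have -> : (fun e f : tile => (pickle e < pickle f)%N) = relpre pickle ltn by [].
rewrite -sorted_map ltn_sorted_uniq_leq (map_inj_uniq (pcan_inj (@pickleK _))).
rewrite sort_uniq undup_uniq /=.
have := sort_sorted (leT := ple) _ (undup T).
have -> : ple = relpre pickle leq by [].
rewrite -sorted_map => ->//.
by move=> x y; apply: leq_total.
Qed.

Lemma canonical_uniq T : canonical_set T -> uniq T.
Proof.
rewrite /canonical_set.
have -> : (fun e f : tile => (pickle e < pickle f)%N) = relpre pickle ltn by [].
by rewrite -sorted_map ltn_sorted_uniq_leq (map_inj_uniq (pcan_inj (@pickleK _))) => /andP[].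
Qed.

Lemma canonical_eq T T' : canonical_set T -> canonical_set T' -> T =i T' -> T = T'.
Proof.
apply: irr_sorted_eq.
- by move=> x y z; apply: ltn_trans.
- by move=> x; rewrite ltnn.
Qed.

Lemma tnorm_csort T : uniq T -> tnorm (csort T) = tnorm T.
Proof.
move=> uT; rewrite /tnorm /csort undup_id //; apply: perm_sumn; apply: perm_map.
by rewrite perm_sort.
Qed.

End P1.
Import P1.

Module P2.
Set Implicit Arguments. Unset Strict Implicit. Unset Printing Implicit Defensive.
Import Order.TTheory GRing.Theory Num.Theory.

Lemma ups_rts p k : (ups p k + rts p k = minn k (size p))%N.
Proof.
rewrite /ups /rts.
have -> : count negb (take k p) = count (predC id) (take k p) by apply: eq_count.
by rewrite count_predC size_take_min.
Qed.

Lemma ups_over p k : (size p <= k)%N -> ups p k = ups p (size p).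
Proof. by move=> h; rewrite /ups take_oversize // take_size. Qed.
Lemma rts_over p k : (size p <= k)%N -> rts p k = rts p (size p).
Proof. by move=> h; rewrite /rts take_oversize // take_size. Qed.

Lemma ups_S p k : (k < size p)%N -> ups p k.+1 = (ups p k + nth false p k)%N.
Proof. by move=> h; rewrite /ups (take_nth false h) -cats1 count_cat /= addn0. Qed.
Lemma rts_S p k : (k < size p)%N -> rts p k.+1 = (rts p k + ~~ nth false p k)%N.
Proof. by move=> h; rewrite /rts (take_nth false h) -cats1 count_cat /= addn0. Qed.

Lemma ups_cat1 p q k : (k <= size p)%N -> ups (p ++ q) k = ups p k.
Proof.
move=> h; rewrite /ups take_cat; case: ltnP => // h2.
have -> : k = size p by apply/eqP; rewrite eqn_leq h h2.
by rewrite subnn take0 cats0 take_size.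
Qed.
Lemma rts_cat1 p q k : (k <= size p)%N -> rts (p ++ q) k = rts p k.
Proof.
move=> h; rewrite /rts take_cat; case: ltnP => // h2.
have -> : k = size p by apply/eqP; rewrite eqn_leq h h2.
by rewrite subnn take0 cats0 take_size.
Qed.
Lemma ups_cat2 p q j : ups (p ++ q) (size p + j) = (ups p (size p) + ups q j)%N.
Proof.
rewrite /ups take_cat ltnNge leq_addr /= addKn count_cat take_size //.
Qed.
Lemma rts_cat2 p q j : rts (p ++ q) (size p + j) = (rts p (size p) + rts q j)%N.
Proof.
rewrite /rts take_cat ltnNge leq_addr /= addKn count_cat take_size //.
Qed.

Lemma ups_take p k j : ups (take k p) j = ups p (minn j k).
Proof. by rewrite /ups take_min. Qed.
Lemma rts_take p k j : rts (take k p) j = rts p (minn j k).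
Proof. by rewrite /rts take_min. Qed.

Lemma ups_drop p k j : (ups (drop k p) j + ups p k)%N = ups p (k + j).
Proof.
rewrite /ups take_drop (addnC k j).
set q := take (j + k) p.
have -> : take k p = take k q by rewrite /q take_takel // leq_addl.
by rewrite addnC -count_cat cat_take_drop.
Qed.
Lemma rts_drop p k j : (rts (drop k p) j + rts p k)%N = rts p (k + j).
Proof.
rewrite /rts take_drop (addnC k j).
set q := take (j + k) p.
have -> : take k p = take k q by rewrite /q take_takel // leq_addl.
by rewrite addnC -count_cat cat_take_drop.
Qed.

Lemma ups0 p : ups p 0 = 0%N. Proof. by rewrite /ups take0. Qed.
Lemma rts0 p : rts p 0 = 0%N. Proof. by rewrite /rts take0. Qed.

Lemma dyck_wordP w : dyck_word w -> (forall k, rts w k <= ups w k)%N /\ ups w (size w) = rts w (size w).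
Proof.
case/andP=> /allP h /eqP e; split=> // k.
case: (leqP k (size w)) => hk.
  by apply: h; rewrite mem_iota /= add0n ltnS.
rewrite ups_over ?rts_over ?(ltnW hk) //; apply: h.
by rewrite mem_iota /= add0n ltnS.
Qed.

Lemma dyck_wordE w : ((forall k, (k <= size w)%N -> rts w k <= ups w k) /\ ups w (size w) = rts w (size w))%N -> dyck_word w.
Proof.
case=> h e; apply/andP; split; last by apply/eqP.
by apply/allP=> k; rewrite mem_iota add0n ltnS => /andP[_ /h].
Qed.

Lemma is_dyckP n p : is_dyck n p -> size p = (2 * n)%N /\ (forall k, rts p k <= ups p k)%N /\ ups p (size p) = rts p (size p).
Proof.
case=> s [h e]; split=> //; split=> // k.
case: (leqP k (size p)) => hk; first exact: h.
by rewrite ups_over ?rts_over ?(ltnW hk) //; apply: h.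
Qed.

End P2.
Import P2.

Module P3.
Set Implicit Arguments. Unset Strict Implicit. Unset Printing Implicit Defensive.
Import Order.TTheory GRing.Theory Num.Theory.
Local Open Scope ring_scope.

Definition ct (c : int * int) : int := c.1 + c.2.
Definition ch (c : int * int) : int := c.2 - c.1.

Lemma cell_eq (c d : int * int) : ct c = ct d -> ch c = ch d -> c = d.
Proof. case: c d => [x y] [x' y']; rewrite /ct /ch /= => h1 h2; congr pair; lia. Qed.

Lemma cell_par (c : int * int) : exists z : int, ct c = ch c + 2 * z.
Proof. case: c => x y; exists x; rewrite /ct /ch /=; lia. Qed.

Lemma tcell_t e k : ct (tcell e k) = ct e.1 + (minn k (size e.2))%:Z.
Proof. case: e => [[x y] w]; rewrite /tcell /ct /= -(ups_rts w k); lia. Qed.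

Lemma tcell_h e k : ch (tcell e k) = ch e.1 + hgt e.2 k.
Proof. case: e => [[x y] w]; rewrite /tcell /ch /hgt /=; lia. Qed.

Lemma tcell0 e : tcell e 0 = e.1.
Proof. case: e => [[x y] w]; rewrite /tcell /= ups0 rts0 !addr0 //. Qed.

Lemma tcell_inj e j k : (j <= size e.2)%N -> (k <= size e.2)%N -> ct (tcell e j) = ct (tcell e k) -> j = k.
Proof. rewrite !tcell_t => hj hk; lia. Qed.

Lemma mem_thalf e c (b : bool) : (0 < size e.2)%N ->
  ((c, b) \in thalf e) <-> exists k, (if b then (k < size e.2)%N else (0 < k <= size e.2)%N) /\ c = tcell e k.
Proof.
move=> hm; rewrite /thalf in_cons mem_cat mem_seq1; split.
- case/or3P.
  + by move/eqP => [-> ->]; exists 0%N.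
  + case/flatten_mapP=> k; rewrite mem_iota => /andP[k1 k2].
    by rewrite !inE => /orP[] /eqP [-> ->]; exists k; split=> //; lia.
  + by move/eqP => [-> ->]; exists (size e.2); split=> //; lia.
- case=> k []; case: b => hk ->.
  + case: k hk => [|k] hk; first by rewrite eqxx.
    apply/or3P; apply: Or32; apply/flatten_mapP; exists k.+1; last by rewrite !inE eqxx orbT.
    rewrite mem_iota; lia.
  + case/andP: hk => k1; rewrite leq_eqVlt => /orP[/eqP ->|k2]; first by rewrite eqxx !orbT.
    apply/or3P; apply: Or32; apply/flatten_mapP; exists k; last by rewrite !inE eqxx.
    rewrite mem_iota; lia.
Qed.

Lemma tcell_shift e k : tcell (shift_tile e) k = ((tcell e k).1 + 1, (tcell e k).2 - 1).
Proof. case: e => [[x y] w]; rewrite /tcell /=; congr pair; lia. Qed.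

Definition sh (c : int * int) : int * int := (c.1 + 1, c.2 - 1).
Lemma sh_t c : ct (sh c) = ct c. Proof. rewrite /ct /sh /=; lia. Qed.
Lemma sh_h c : ch (sh c) = ch c - 2. Proof. rewrite /ch /sh /=; lia. Qed.

Definition tr (v : int) (e : tile) : tile := ((e.1.1 + v, e.1.2 + v), e.2).
Definition trc (v : int) (c : int * int) : int * int := (c.1 + v, c.2 + v).
Definition trh (v : int) (h : halfcell) : halfcell := (trc v h.1, h.2).

Lemma tcell_tr v e k : tcell (tr v e) k = trc v (tcell e k).
Proof. case: e => [[x y] w]; rewrite /tcell /trc /=; congr pair; lia. Qed.

Lemma thalf_tr v e : thalf (tr v e) = map (trh v) (thalf e).
Proof.
rewrite /thalf /= map_cat map_flatten -map_comp /= tcell_tr; congr cons; congr cat.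
  by congr (flatten _); apply: eq_map => k /=; rewrite tcell_tr.
by rewrite /= tcell_tr.
Qed.

Lemma thalf_shift e : thalf (shift_tile e) = map (fun h => (sh h.1, h.2)) (thalf e).
Proof.
rewrite /thalf /= map_cat map_flatten -map_comp /= tcell_shift; congr cons; congr cat.
  by congr (flatten _); apply: eq_map => k /=; rewrite tcell_shift.
by rewrite /= tcell_shift.
Qed.

Lemma diags_tr v e : diags (tr v e) = map (fun d => (trc v d.1, trc v d.2)) (diags e).
Proof. rewrite /diags !tcell_tr /= /trc /=; congr [:: (_,_); (_,_)]; congr pair; lia. Qed.

Lemma shift_tr v e : shift_tile (tr v e) = tr v (shift_tile e).
Proof. case: e => [[x y] w]; rewrite /tr /shift_tile /=; congr (pair (pair _ _) _); lia. Qed.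

Lemma trK v : cancel (tr v) (tr (- v)).
Proof. case=> [[x y] w]; rewrite /tr /=; congr (pair (pair _ _) _); lia. Qed.
Lemma trc_inj v : injective (trc v).
Proof. move=> [x y] [x' y'] [] *; congr pair; lia. Qed.
Lemma trh_inj v : injective (trh v).
Proof. move=> [c b] [d b'] E; have E1 := congr1 fst E; have E2 := congr1 snd E; rewrite /= in E1 E2; by rewrite (trc_inj E1) E2. Qed.
Lemma tr_inj v : injective (tr v).
Proof. exact: can_inj (trK v). Qed.

End P3.
Import P3.

Module P4.
Set Implicit Arguments. Unset Strict Implicit. Unset Printing Implicit Defensive.
Import Order.TTheory GRing.Theory Num.Theory.

Definition tiling (P : halfcell -> bool) (T : seq tile) : Prop :=
  (forall e : tile, e \in T -> valid_tile e) /\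
  (forall e : tile, e \in T -> all P (thalf e)) /\
  (forall e f : tile, e \in T -> f \in T -> e != f ->
     ~~ has (fun c => c \in thalf f) (thalf e)) /\
  (forall e : tile, e \in T -> has P (thalf (shift_tile e)) ->
     exists2 f : tile, f \in T &
       (f != e) && all (fun c => c \in thalf f) (thalf (shift_tile e))) /\
  (forall e f : tile, e \in T -> f \in T -> e != f ->
     ~~ has (fun d => d \in diags f) (diags e)).

Lemma is_tdtilingE lam a mu T : is_tdtiling lam a mu T <-> canonical_set T /\ tiling (hc_in lam mu a) T.
Proof. by []. Qed.

Lemma tiling_mem P T T' : T =i T' -> tiling P T -> tiling P T'.
Proof.
move=> E [h1 [h2 [h3 [h4 h5]]]]; split; [|split; [|split; [|split]]].
- by move=> e; rewrite -E; apply: h1.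
- by move=> e; rewrite -E; apply: h2.
- by move=> e f; rewrite -!E; apply: h3.
- move=> e; rewrite -E => eT /(h4 _ eT) [f fT H]; exists f => //; by rewrite -E.
- by move=> e f; rewrite -!E; apply: h5.
Qed.

Lemma tiling_ext P Q T : P =1 Q -> tiling P T -> tiling Q T.
Proof.
move=> E [h1 [h2 [h3 [h4 h5]]]]; split; [|split; [|split; [|split]]] => //.
- by move=> e eT; rewrite -(eq_all E); apply: h2.
- by move=> e eT; rewrite -(eq_has E); apply: h4.
Qed.

Lemma tiling_tr P Q v T : (forall h, Q (trh v h) = P h) -> tiling P T -> tiling Q (map (tr v) T).
Proof.
move=> E [h1 [h2 [h3 [h4 h5]]]]; split; [|split; [|split; [|split]]].
- move=> e' He. case/mapP: He => e eT Ee. rewrite Ee. exact: (h1 _ eT).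
- move=> e' /mapP [e eT] ->; rewrite thalf_tr all_map.
  by rewrite (eq_all (a2 := P)) ?h2 // => x /=.
- move=> e' f' /mapP [e eT] -> /mapP [f fT] -> ne.
  rewrite !thalf_tr has_map.
  rewrite (eq_has (a2 := fun c => c \in thalf f)); first apply: h3 => //.
    by apply: contra ne => /eqP ->.
  by move=> x; exact: (mem_map (@trh_inj v)).
- move=> e' /mapP [e eT] ->; rewrite shift_tr thalf_tr has_map.
  rewrite (eq_has (a2 := P)) // => /(h4 _ eT) [f fT /andP [ne H]].
  exists (tr v f); first by apply: map_f.
  rewrite (inj_eq (@tr_inj v)) ne andTb thalf_tr all_map.
  by rewrite (eq_all (a2 := fun c => c \in thalf f)) // => x; exact: (mem_map (@trh_inj v)).
- move=> e' f' /mapP [e eT] -> /mapP [f fT] -> ne.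
  rewrite !diags_tr has_map.
  rewrite (eq_has (a2 := fun d => d \in diags f)); first apply: h5 => //.
    by apply: contra ne => /eqP ->.
  have inj2 : injective (fun d : (int*int)*(int*int) => (trc v d.1, trc v d.2)).
    move=> [p q] [p' q'] Ed; have E1 := congr1 fst Ed; have E2 := congr1 snd Ed.
    by rewrite /= in E1 E2; rewrite (trc_inj E1) (trc_inj E2).
  by move=> x; exact: (mem_map inj2).
Qed.

End P4.
Import P4.

Module P5.
Set Implicit Arguments. Unset Strict Implicit. Unset Printing Implicit Defensive.
Import Order.TTheory GRing.Theory Num.Theory.
Local Open Scope ring_scope.

Definition ptq lam mu (a : nat) (t h : int) : bool :=
  [&& 0 <= t, t <= (size lam)%:Z, hgt lam (absz t) <= h & h <= (2 * a)%:Z + hgt mu (absz t)].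

Definition colh (hc : halfcell) : int := ct hc.1 + (if hc.2 then 1 else 0).

Lemma hcF lam mu a c : hc_in lam mu a (c, false) =
  [&& ptq lam mu a (ct c) (ch c), ptq lam mu a (ct c + 1) (ch c - 1) & ptq lam mu a (ct c + 1) (ch c + 1)].
Proof.
case: c => x y; rewrite /hc_in /= andbT /pt_in /ptq /ct /ch /=.
have -> : x + 1 + y = x + y + 1 by lia.
have -> : y - (x + 1) = y - x - 1 by lia.
have -> : x + (y + 1) = x + y + 1 by lia.
have -> : y + 1 - x = y - x + 1 by lia.
by [].
Qed.

Lemma hcT lam mu a c : hc_in lam mu a (c, true) =
  [&& ptq lam mu a (ct c + 1) (ch c - 1), ptq lam mu a (ct c + 1) (ch c + 1) & ptq lam mu a (ct c + 2) (ch c)].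
Proof.
case: c => x y; rewrite /hc_in /= andbT /pt_in /ptq /ct /ch /=.
have -> : x + 1 + y = x + y + 1 by lia.
have -> : y - (x + 1) = y - x - 1 by lia.
have -> : x + (y + 1) = x + y + 1 by lia.
have -> : y + 1 - x = y - x + 1 by lia.
have -> : x + 1 + (y + 1) = x + y + 2 by lia.
have -> : y + 1 - (x + 1) = y - x by lia.
by [].
Qed.

Lemma hgt_cat1 p q k : (k <= size p)%N -> hgt (p ++ q) k = hgt p k.
Proof. by move=> h; rewrite /hgt ups_cat1 ?rts_cat1. Qed.
Lemma hgt_cat2 p q j : hgt (p ++ q) (size p + j) = hgt p (size p) + hgt q j.
Proof. rewrite /hgt ups_cat2 rts_cat2; lia. Qed.

Lemma hgt_step p k : hgt p k.+1 - 1 <= hgt p k <= hgt p k.+1 + 1.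
Proof.
rewrite /hgt; case: (ltnP k (size p)) => h.
  rewrite ups_S ?rts_S //; case: (nth false p k) => /=; lia.
rewrite (ups_over (leqW h)) (rts_over (leqW h)) (ups_over h) (rts_over h); lia.
Qed.

Lemma hgt_take p k j : hgt (take k p) j = hgt p (minn j k).
Proof. by rewrite /hgt ups_take rts_take. Qed.
Lemma hgt_drop p k j : hgt (drop k p) j = hgt p (k + j) - hgt p k.
Proof. rewrite /hgt -ups_drop -rts_drop; lia. Qed.
Lemma hgt0 p : hgt p 0 = 0.
Proof. by rewrite /hgt ups0 rts0. Qed.

Lemma dyck_hgt w : dyck_word w -> (forall k, 0 <= hgt w k) /\ hgt w (size w) = 0.
Proof. case/dyck_wordP=> h e; split; last by rewrite /hgt e; lia.
by move=> k; have := h k; rewrite /hgt; lia. Qed.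

Lemma dyck_hgtE w : (forall k, 0 <= hgt w k) -> hgt w (size w) = 0 -> dyck_word w.
Proof. move=> h e; apply: dyck_wordE; split.
  by move=> k _; have := h k; rewrite /hgt; lia.
by move: e; rewrite /hgt; lia. Qed.

Lemma hgt_even w k : hgt w k = 0 -> (k <= size w)%N -> ~~ odd k.
Proof. move=> h hk; have := ups_rts w k; move: h; rewrite /hgt.
have -> : minn k (size w) = k by lia.
move=> h1 h2; apply/negP => o; lia. Qed.

End P5.
Import P5.

Module P6.
Set Implicit Arguments. Unset Strict Implicit. Unset Printing Implicit Defensive.
Import Order.TTheory GRing.Theory Num.Theory.
Local Open Scope ring_scope.

Lemma ptq_neg lam mu a t h : t < 0 -> ptq lam mu a t h = false.
Proof. by rewrite /ptq => h0; apply/negP => /and4P []; lia. Qed.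
Lemma ptq_big lam mu a t h : (size lam)%:Z < t -> ptq lam mu a t h = false.
Proof. by rewrite /ptq => h0; apply/negP => /and4P []; lia. Qed.

Lemma ptL lam1 lam2 mu1 mu2 a t h : size mu1 = size lam1 -> t <= (size lam1)%:Z ->
  ptq (lam1 ++ lam2) (mu1 ++ mu2) a t h = ptq lam1 mu1 a t h.
Proof.
move=> sm ht; case: (ltP t 0) => h0; first by rewrite !ptq_neg.
rewrite /ptq size_cat !hgt_cat1 ?sm; lia.
Qed.

Lemma ptR lam1 lam2 mu1 mu2 a i t h : size mu1 = size lam1 -> hgt lam1 (size lam1) = 0 ->
  (2 * a)%:Z + hgt mu1 (size lam1) = (2 * i)%:Z -> (size lam1)%:Z <= t ->
  ptq (lam1 ++ lam2) (mu1 ++ mu2) a t h = ptq lam2 mu2 i (t - (size lam1)%:Z) h.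
Proof.
move=> sm hl hm ht.
have E : absz t = (size lam1 + absz (t - (size lam1)%:Z))%N by lia.
have E1 : hgt (lam1 ++ lam2) (absz t) = hgt lam2 (absz (t - (size lam1)%:Z)) by rewrite E hgt_cat2 hl add0r.
have E2 : hgt (mu1 ++ mu2) (absz t) = hgt mu1 (size lam1) + hgt mu2 (absz (t - (size lam1)%:Z)).
  by rewrite E -{1}sm hgt_cat2 sm.
rewrite /ptq size_cat E1 E2 addrA hm.
have -> : (0 <= t) = (0 <= t - (size lam1)%:Z) by lia.
by have -> : (t <= (size lam1 + size lam2)%N%:Z) = (t - (size lam1)%:Z <= (size lam2)%:Z) by lia.
Qed.

Lemma hc_left lam1 lam2 mu1 mu2 a hc : size mu1 = size lam1 ->
  hc_in lam1 mu1 a hc = hc_in (lam1 ++ lam2) (mu1 ++ mu2) a hc && (colh hc + 1 <= (size lam1)%:Z).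
Proof.
move=> sm; case: hc => c [].
- rewrite !hcT /colh /=; case: (leP (ct c + 1 + 1) (size lam1)%:Z) => hk.
    by rewrite !ptL ?andbT //; lia.
  have hf : ptq lam1 mu1 a (ct c + 2) (ch c) = false by apply: ptq_big; lia.
  by rewrite hf !andbF.
- rewrite !hcF /colh /=; case: (leP (ct c + 0 + 1) (size lam1)%:Z) => hk.
    by rewrite !ptL ?andbT //; lia.
  have hf : ptq lam1 mu1 a (ct c + 1) (ch c - 1) = false by apply: ptq_big; lia.
  by rewrite hf !andbF.
Qed.

Lemma hc_right lam1 lam2 mu1 mu2 a i (v : int) hc : size mu1 = size lam1 -> hgt lam1 (size lam1) = 0 ->
  (2 * a)%:Z + hgt mu1 (size lam1) = (2 * i)%:Z -> (size lam1)%:Z = 2 * v ->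
  hc_in lam2 mu2 i (trh (- v) hc) = hc_in (lam1 ++ lam2) (mu1 ++ mu2) a hc && ((size lam1)%:Z <= colh hc).
Proof.
move=> sm hl hm hv; case: hc => c [].
- have Ht : ct (trc (- v) c) = ct c - (size lam1)%:Z by rewrite /ct /trc /=; lia.
  have Hh : ch (trc (- v) c) = ch c by rewrite /ch /trc /=; lia.
  rewrite /trh /= !hcT Ht Hh /colh /=; case: (leP (size lam1)%:Z (ct c + 1)) => hk.
    rewrite !(ptR _ _ _ _ hl hm) ?andbT //; try lia.
    have -> : ct c - (size lam1)%:Z + 1 = ct c + 1 - (size lam1)%:Z by lia.
    by have -> : ct c - (size lam1)%:Z + 2 = ct c + 2 - (size lam1)%:Z by lia.
  by rewrite andbF ptq_neg //; lia.
- have Ht : ct (trc (- v) c) = ct c - (size lam1)%:Z by rewrite /ct /trc /=; lia.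
  have Hh : ch (trc (- v) c) = ch c by rewrite /ch /trc /=; lia.
  rewrite /trh /= !hcF Ht Hh /colh /=; case: (leP (size lam1)%:Z (ct c + 0)) => hk.
    rewrite !(ptR _ _ _ _ hl hm) ?andbT //; try lia.
    by have -> : ct c - (size lam1)%:Z + 1 = ct c + 1 - (size lam1)%:Z by lia.
  by rewrite andbF ptq_neg //; lia.
Qed.

End P6.
Import P6.

Module P7.
Set Implicit Arguments. Unset Strict Implicit. Unset Printing Implicit Defensive.
Import Order.TTheory GRing.Theory Num.Theory.
Local Open Scope ring_scope.

Lemma valid_size e : valid_tile e -> (0 < size e.2)%N.
Proof. by case/andP. Qed.
Lemma valid_dyck e : valid_tile e -> (forall k, 0 <= hgt e.2 k) /\ hgt e.2 (size e.2) = 0.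
Proof. by case/andP => _ /dyck_hgt. Qed.

Lemma in_thalfT e k : valid_tile e -> (k < size e.2)%N -> (tcell e k, true) \in thalf e.
Proof. by move=> /valid_size v hk; apply/mem_thalf => //; exists k. Qed.
Lemma in_thalfF e k : valid_tile e -> (0 < k <= size e.2)%N -> (tcell e k, false) \in thalf e.
Proof. by move=> /valid_size v hk; apply/mem_thalf => //; exists k. Qed.

Lemma in_shift e c b : (c, b) \in thalf e -> (sh c, b) \in thalf (shift_tile e).
Proof. by move=> h; rewrite thalf_shift; apply: (map_f (fun h => (sh h.1, h.2)) h). Qed.

Lemma tiling_in P T e hc : tiling P T -> e \in T -> hc \in thalf e -> P hc.
Proof. by case=> _ [h2 _] eT hT; move/allP: (h2 e eT); apply. Qed.

Lemma tiling_valid P T e : tiling P T -> e \in T -> valid_tile e.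
Proof. by case=> h1 _; apply: h1. Qed.

Lemma ptq_lo lam mu a t h : ptq lam mu a t h -> hgt lam (absz t) <= h.
Proof. by case/and4P. Qed.

Lemma cross_ret lam mu a (K : nat) T :
  hgt lam K = 0 -> (forall t, 0 <= hgt lam t) -> ~~ odd K ->
  tiling (hc_in lam mu a) T ->
  forall e : tile, e \in T -> forall k, (0 < k < size e.2)%N -> ct e.1 + k%:Z + 1 = K%:Z -> hgt e.2 k = 0.
Proof.
move=> HK Hnn Hev HT.
suff: forall N : nat, forall e : tile, e \in T -> forall k, (0 < k < size e.2)%N -> ct e.1 + k%:Z + 1 = K%:Z ->
  ch (tcell e k) <= N%:Z -> hgt e.2 k = 0.
  move=> H e eT k hk hK; apply: (H (absz (ch (tcell e k))) e eT k hk hK); lia.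
elim=> [|N IH] e eT k hk hK hN.
  have v := tiling_valid HT eT.
  have hk' : (0 < k <= size e.2)%N by lia.
  have := tiling_in HT eT (in_thalfF v hk'); rewrite hcF => /and3P [_ p2 _].
  move: (ptq_lo p2); rewrite tcell_t.
  have -> : absz (ct e.1 + (minn k (size e.2))%:Z + 1) = K by lia.
  rewrite HK; lia.
have v := tiling_valid HT eT.
have [Dnn Dm] := valid_dyck v.
apply/eqP; apply: contraT => /eqP hne.
have hpos : 0 < hgt e.2 k by have := Dnn k; lia.
set c := tcell e k.
have Hct : ct c = K%:Z - 1 by rewrite /c tcell_t; lia.
have Hch : ch c = ch e.1 + hgt e.2 k by rewrite /c tcell_h.
have H0 : 1 <= ch e.1.
  have hk' : (0 < size e.2)%N by lia.
  have := tiling_in HT eT (in_thalfT v hk'); rewrite hcT => /and3P [p1 _ _].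
  move: (ptq_lo p1); rewrite tcell_h tcell0 hgt0; have := Hnn (absz (ct e.1 + 1)); lia.
have [z Hz] := cell_par c.
have [q Hq] : exists q, K = (2 * q)%N.
  by exists K./2; rewrite -{1}(odd_double_half K) (negbTE Hev) add0n -muln2 mulnC.
have Hd3 : 3 <= ch c.
  clear -Hz Hct Hq Hch H0 hpos; lia.
have hk' : (0 < k <= size e.2)%N by lia.
have hc := tiling_in HT eT (in_thalfF v hk'); rewrite hcF -/c in hc.
case/and3P: hc => q1 q2 q3.
have HKm1 : hgt lam (absz (ct c)) <= 1.
  have Kpos : (0 < K)%N by move: q1; rewrite /ptq => /and4P []; lia.
  have := hgt_step lam (absz (ct c)).
  have -> : (absz (ct c)).+1 = K by lia.
  lia.
have hs : hc_in lam mu a (sh c, false).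
  rewrite hcF sh_t sh_h.
  move: q1 q2 q3; rewrite /ptq => /and4P [a1 a2 a3 a4] /and4P [b1 b2 b3 b4] /and4P [c1 c2 c3 c4].
  have EK : absz (ct c + 1) = K by lia.
  move: b3 b4 c3 c4; rewrite EK HK => b3 b4 c3 c4.
  apply/and3P; split; apply/and4P; split => //; try lia.
have hsT : (sh c, false) \in thalf (shift_tile e) by apply: in_shift; apply: in_thalfF => //; lia.
have hsT2 : (sh c, true) \in thalf (shift_tile e) by apply: in_shift; apply: in_thalfT => //; lia.
have hsT0 : (sh e.1, true) \in thalf (shift_tile e).
  by apply: in_shift; rewrite -{1}(tcell0 e); apply: in_thalfT => //; lia.
case: HT => [h1 [h2 [h3 [h4 h5]]]].
have := h4 e eT; case.
  by apply/hasP; exists (sh c, false).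
move=> f fT /andP [nfe /allP Hall].
have vf := h1 f fT.
have [Fnn Fm] := valid_dyck vf.
have sf := valid_size vf.
have [j1 [hj1 E1]] := (mem_thalf _ _ sf).1 (Hall _ hsT).
have [j2 [hj2 E2]] := (mem_thalf _ _ sf).1 (Hall _ hsT2).
have [j0 [hj0 E0]] := (mem_thalf _ _ sf).1 (Hall _ hsT0).
have j12 : j1 = j2.
  apply: (tcell_inj (e := f)); [by case/andP: hj1 | by apply: ltnW | by rewrite -E1 -E2].
subst j2.
have Hct1 : ct (tcell f j1) = K%:Z - 1 by rewrite -E1 sh_t.
have Hj1 : (0 < j1 < size f.2)%N by clear -hj1 hj2; lia.
have Hj1K : ct f.1 + j1%:Z + 1 = K%:Z.
  by move: Hct1; rewrite tcell_t; clear -Hj1; lia.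
have Hch1 : ch (tcell f j1) = ch c - 2 by rewrite -E1 sh_h.
rewrite /c in Hch1 Hch. have HchN : ch (tcell f j1) <= N%:Z by clear -Hch1 hN; lia.
have hz := IH f fT j1 Hj1 Hj1K HchN.
have := Hch1; rewrite tcell_h hz => Hf1.
have := congr1 ch E0; rewrite sh_h tcell_h => Hf0.
have := Fnn j0; clear -Hf1 Hf0 Hch hpos; lia.
Qed.

End P7.
Import P7.

Module P8.
Set Implicit Arguments. Unset Strict Implicit. Unset Printing Implicit Defensive.
Import Order.TTheory GRing.Theory Num.Theory.
Local Open Scope ring_scope.

Definition lastc (e : tile) := tcell e (size e.2).
Definition glue (e1 e2 : tile) : tile := (e1.1, e1.2 ++ e2.2).
Definition dg (c : int * int) := ((c.1 + 1, c.2), (c.1, c.2 + 1)).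

Lemma dg_inj : injective dg.
Proof. move=> [x y] [x' y'] E; have E1 := congr1 fst E; have E2 := congr1 snd E.
rewrite /= in E1 E2; case: E1 => _ ->; case: E2 => -> _; by []. Qed.

Lemma diagsE e : diags e = [:: dg (tcell e 0); dg (lastc e)].
Proof. by []. Qed.

Lemma tcell_cat1 p w1 w2 j : (j <= size w1)%N -> tcell (p, w1 ++ w2) j = tcell (p, w1) j.
Proof. by move=> h; rewrite /tcell /= ups_cat1 ?rts_cat1. Qed.

Lemma tcell_cat2 p w1 w2 j : tcell (p, w1 ++ w2) (size w1 + j) = tcell (tcell (p, w1) (size w1), w2) j.
Proof. rewrite /tcell /= ups_cat2 rts_cat2; congr pair; lia. Qed.

Lemma glue_size e1 e2 : size (glue e1 e2).2 = (size e1.2 + size e2.2)%N.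
Proof. by rewrite /glue /= size_cat. Qed.

Lemma glue_cell1 e1 e2 j : (j <= size e1.2)%N -> tcell (glue e1 e2) j = tcell e1 j.
Proof. by case: e1 => p w1 h; rewrite /glue tcell_cat1. Qed.

Lemma glue_cell2 e1 e2 j : e2.1 = lastc e1 -> tcell (glue e1 e2) (size e1.2 + j) = tcell e2 j.
Proof. by case: e1 e2 => p w1 [q w2] /= ->; rewrite /glue tcell_cat2. Qed.

Lemma glue_lastc e1 e2 : e2.1 = lastc e1 -> lastc (glue e1 e2) = lastc e2.
Proof. by move=> h; rewrite /lastc glue_size glue_cell2. Qed.

Lemma glue_first e1 e2 : (glue e1 e2).1 = e1.1.
Proof. by []. Qed.

Lemma glue_valid e1 e2 : valid_tile e1 -> valid_tile e2 -> valid_tile (glue e1 e2).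
Proof.
move=> v1 v2; have s1 := valid_size v1; have [D1 m1] := valid_dyck v1; have [D2 m2] := valid_dyck v2.
apply/andP; split; first by rewrite glue_size; lia.
apply: dyck_hgtE; last by rewrite glue_size /glue /= hgt_cat2 m1 m2 addr0.
move=> k; rewrite /glue /=; case: (leqP k (size e1.2)) => hk.
  by rewrite hgt_cat1.
have -> : k = (size e1.2 + (k - size e1.2))%N by lia.
by rewrite hgt_cat2 m1 add0r.
Qed.

Lemma mem_thalf_glue e1 e2 hc : (0 < size e1.2)%N -> (0 < size e2.2)%N -> e2.1 = lastc e1 ->
  (hc \in thalf (glue e1 e2)) = (hc \in thalf e1) || (hc \in thalf e2).
Proof.
move=> s1 s2 E; case: hc => c b.
have sg : (0 < size (glue e1 e2).2)%N by rewrite glue_size; lia.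
apply/idP/idP.
- move/(mem_thalf _ _ sg) => [k [hk ->]].
  case: (leqP k (size e1.2)) => h1.
    case: b hk => hk.
      case: (ltnP k (size e1.2)) => h2.
        by apply/orP; left; apply/mem_thalf => //; exists k; rewrite glue_cell1.
      have -> : k = (size e1.2 + 0)%N by lia.
      by apply/orP; right; apply/mem_thalf => //; exists 0%N; rewrite glue_cell2 //; split=> //.
    by apply/orP; left; apply/mem_thalf => //; exists k; rewrite glue_cell1 //; split=> //; lia.
  have -> : k = (size e1.2 + (k - size e1.2))%N by lia.
  apply/orP; right; apply/mem_thalf => //; exists (k - size e1.2)%N; rewrite glue_cell2 //.
  split=> //; case: b hk; rewrite glue_size; lia.
- case/orP.
  + move/(mem_thalf _ _ s1) => [k [hk ->]]; apply/mem_thalf => //; exists k; rewrite glue_cell1.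
      split=> //; case: b hk; rewrite glue_size; lia.
    case: b hk; lia.
  + move/(mem_thalf _ _ s2) => [k [hk ->]]; apply/mem_thalf => //; exists (size e1.2 + k)%N.
    rewrite glue_cell2 //; split=> //; case: b hk; rewrite glue_size; lia.
Qed.

Lemma lastc_shift e : lastc (shift_tile e) = sh (lastc e).
Proof. by rewrite /lastc tcell_shift. Qed.

Lemma shift_glue e1 e2 : shift_tile (glue e1 e2) = glue (shift_tile e1) (shift_tile e2).
Proof. by []. Qed.

Lemma shift_first e : (shift_tile e).1 = sh e.1.
Proof. by []. Qed.

Lemma valid_shift e : valid_tile (shift_tile e) = valid_tile e.
Proof. by []. Qed.

Definition pre (k : nat) (e : tile) : tile := (e.1, take k e.2).
Definition suf (k : nat) (e : tile) : tile := (tcell e k, drop k e.2).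

Lemma glue_pre_suf k e : glue (pre k e) (suf k e) = e.
Proof. by case: e => p w; rewrite /glue /pre /suf /= cat_take_drop. Qed.

Lemma suf_first k e : (k <= size e.2)%N -> (suf k e).1 = lastc (pre k e).
Proof.
case: e => p w hk; rewrite /suf /pre /lastc /= size_takel //.
by rewrite /tcell /= ups_take rts_take minnn.
Qed.

Lemma pre_valid k e : valid_tile e -> (0 < k)%N -> (k <= size e.2)%N -> hgt e.2 k = 0 -> valid_tile (pre k e).
Proof.
move=> v k0 hk hz; have [D _] := valid_dyck v; apply/andP; split; first by rewrite /pre /= size_takel.
apply: dyck_hgtE.
  by move=> j; rewrite /pre /= hgt_take.
by rewrite /pre /= size_takel // hgt_take minnn.
Qed.

Lemma suf_valid k e : valid_tile e -> (k < size e.2)%N -> hgt e.2 k = 0 -> valid_tile (suf k e).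
Proof.
move=> v hk hz; have [D m] := valid_dyck v; apply/andP; split; first by rewrite /suf /= size_drop; lia.
apply: dyck_hgtE.
  by move=> j; rewrite /suf /= hgt_drop hz subr0.
rewrite /suf /= hgt_drop size_drop hz subr0.
have -> : (k + (size e.2 - k))%N = size e.2 by lia.
by [].
Qed.

Lemma pre_size k e : (k <= size e.2)%N -> size (pre k e).2 = k.
Proof. by move=> h; rewrite /pre /= size_takel. Qed.
Lemma suf_size k e : size (suf k e).2 = (size e.2 - k)%N.
Proof. by rewrite /suf /= size_drop. Qed.

End P8.
Import P8.

Module P9.
Set Implicit Arguments. Unset Strict Implicit. Unset Printing Implicit Defensive.
Import Order.TTheory GRing.Theory Num.Theory.
Local Open Scope ring_scope.

Definition leftT (K : int) (e : tile) := all (fun hc => colh hc + 1 <= K) (thalf e).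
Definition rightT (K : int) (e : tile) := all (fun hc => K <= colh hc) (thalf e).

Lemma col_thalf e hc : valid_tile e -> hc \in thalf e ->
  ct e.1 + 1 <= colh hc <= ct e.1 + (size e.2)%:Z.
Proof.
move=> v; have s := valid_size v; case: hc => c b /(mem_thalf _ _ s) [k [hk ->]].
rewrite /colh tcell_t /=; case: b hk; lia.
Qed.

Lemma first_in (e : tile) : valid_tile e -> (e.1, true) \in thalf e.
Proof. by move=> v; rewrite -{1}(tcell0 e); apply: in_thalfT => //; apply: valid_size. Qed.
Lemma last_in e : valid_tile e -> (lastc e, false) \in thalf e.
Proof. by move=> v; apply: in_thalfF => //; have := valid_size v; lia. Qed.

Lemma col_first (e : tile) : colh (e.1, true) = ct e.1 + 1. Proof. by []. Qed.
Lemma col_last e : colh (lastc e, false) = ct e.1 + (size e.2)%:Z.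
Proof. rewrite /colh /lastc tcell_t /=; lia. Qed.

Lemma leftTE K e : valid_tile e -> leftT K e = (ct e.1 + (size e.2)%:Z + 1 <= K).
Proof.
move=> v; apply/allP/idP.
- by move=> /(_ _ (last_in v)); rewrite col_last.
- by move=> h hc /(col_thalf v) hh; lia.
Qed.
Lemma rightTE K e : valid_tile e -> rightT K e = (K <= ct e.1 + 1).
Proof.
move=> v; apply/allP/idP.
- by move=> /(_ _ (first_in v)); rewrite col_first.
- by move=> h hc /(col_thalf v) hh; lia.
Qed.

Definition ohalf (o : option tile) : seq halfcell := if o is Some e then thalf e else [::].

Definition Dec (K : int) (g : tile) (oL oR : option tile) : Prop :=
  match oL, oR with
  | Some e1, Some e2 => [/\ valid_tile e1, valid_tile e2, leftT K e1, rightT K e2 &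
                          e2.1 = lastc e1 /\ g = glue e1 e2]
  | Some e1, None => [/\ valid_tile e1, leftT K e1 & g = e1]
  | None, Some e2 => [/\ valid_tile e2, rightT K e2 & g = e2]
  | None, None => False
  end.

Lemma Dec_valid K g oL oR : Dec K g oL oR -> valid_tile g.
Proof. case: oL oR => [e1|] [e2|] //=; [case=> ???? [? ->]; exact: glue_valid|by case=> ? ? ->|by case=> ? ? ->]. Qed.

Lemma Dec_thalf K g oL oR hc : Dec K g oL oR -> (hc \in thalf g) = (hc \in ohalf oL) || (hc \in ohalf oR).
Proof.
case: oL oR => [e1|] [e2|] //=.
- case=> v1 v2 _ _ [E ->]; apply: mem_thalf_glue => //; exact: valid_size.
- by case=> _ _ ->; rewrite orbF.
- by case=> _ _ ->.
Qed.

Lemma Dec_oL K g oL oR hc : Dec K g oL oR -> hc \in ohalf oL -> colh hc + 1 <= K.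
Proof. case: oL oR => [e1|] [e2|] //=; [case=> _ _ /allP L _ _|case=> _ /allP L _]; exact: L. Qed.
Lemma Dec_oR K g oL oR hc : Dec K g oL oR -> hc \in ohalf oR -> K <= colh hc.
Proof. case: oL oR => [e1|] [e2|] //=; [case=> _ _ _ /allP L _|case=> _ /allP L _]; exact: L. Qed.

Lemma Dec_left K g oL oR hc : Dec K g oL oR -> hc \in thalf g -> colh hc + 1 <= K -> hc \in ohalf oL.
Proof.
move=> D; rewrite (Dec_thalf _ D) => /orP [] // /(Dec_oR D) h1 h2; lia.
Qed.
Lemma Dec_right K g oL oR hc : Dec K g oL oR -> hc \in thalf g -> K <= colh hc -> hc \in ohalf oR.
Proof.
move=> D; rewrite (Dec_thalf _ D) => /orP [] // /(Dec_oL D) h1 h2; lia.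
Qed.

Lemma colh_sh c b : colh (sh c, b) = colh (c, b).
Proof. by rewrite /colh /= sh_t. Qed.

Lemma mem_shift e hc : hc \in thalf (shift_tile e) -> exists c, hc = (sh c, hc.2) /\ (c, hc.2) \in thalf e.
Proof.
rewrite thalf_shift => /mapP [[c b] H ->]; by exists c.
Qed.

Lemma leftT_shift K e : leftT K (shift_tile e) = leftT K e.
Proof. by rewrite /leftT thalf_shift all_map; apply: eq_all => -[c b]; rewrite /= colh_sh. Qed.
Lemma rightT_shift K e : rightT K (shift_tile e) = rightT K e.
Proof. by rewrite /rightT thalf_shift all_map; apply: eq_all => -[c b]; rewrite /= colh_sh. Qed.

Lemma Dec_shift K g oL oR : Dec K g oL oR ->
  Dec K (shift_tile g) (omap shift_tile oL) (omap shift_tile oR).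
Proof.
case: oL oR => [e1|] [e2|] //=.
- case=> v1 v2 l1 r2 [E ->]; split; rewrite ?valid_shift ?leftT_shift ?rightT_shift //.
  by rewrite lastc_shift -E.
- by case=> v1 l1 ->; split; rewrite ?valid_shift ?leftT_shift.
- by case=> v1 l1 ->; split; rewrite ?valid_shift ?rightT_shift.
Qed.

Definition ofirst (oL oR : option tile) : int * int :=
  match oL, oR with Some e, _ => e.1 | None, Some e => e.1 | _, _ => (0, 0) end.
Definition olast (oL oR : option tile) : int * int :=
  match oR, oL with Some e, _ => lastc e | None, Some e => lastc e | _, _ => (0, 0) end.

Lemma Dec_diags K g oL oR : Dec K g oL oR -> diags g = [:: dg (ofirst oL oR); dg (olast oL oR)].
Proof.
rewrite diagsE tcell0; case: oL oR => [e1|] [e2|] //=.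
- by case=> ???? [E ->]; rewrite glue_lastc.
- by case=> ?? ->.
- by case=> ?? ->.
Qed.

End P9.
Import P9.

Module P10.
Set Implicit Arguments. Unset Strict Implicit. Unset Printing Implicit Defensive.
Import Order.TTheory GRing.Theory Num.Theory.
Local Open Scope ring_scope.

Lemma lastc_ct e : ct (lastc e) = ct e.1 + (size e.2)%:Z.
Proof. rewrite /lastc tcell_t; lia. Qed.

Lemma tile_eq (e f : tile) : e.1 = f.1 -> e.2 = f.2 -> e = f.
Proof. by case: e f => p w [p' w'] /= -> ->. Qed.

Lemma Dec_SS K g e1 e2 : Dec K g (Some e1) (Some e2) ->
  [/\ g.1 = e1.1, g.2 = e1.2 ++ e2.2, ct g.1 + (size e1.2)%:Z + 1 = K, (0 < size e1.2)%N & (0 < size e2.2)%N].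
Proof.
case=> v1 v2 l1 r2 [E ->]; rewrite (leftTE _ v1) in l1; rewrite (rightTE _ v2) E lastc_ct in r2.
split=> //; [rewrite /glue /=; lia| exact: valid_size | exact: valid_size].
Qed.
Lemma Dec_SN K g e1 : Dec K g (Some e1) None -> g = e1 /\ ct g.1 + (size g.2)%:Z + 1 <= K.
Proof. by case=> v1 l1 ->; rewrite (leftTE _ v1) in l1. Qed.
Lemma Dec_NS K g e2 : Dec K g None (Some e2) -> g = e2 /\ K <= ct g.1 + 1.
Proof. by case=> v1 l1 ->; rewrite (rightTE _ v1) in l1. Qed.

Lemma Dec_uniq K g oL oR oL' oR' : Dec K g oL oR -> Dec K g oL' oR' -> oL = oL' /\ oR = oR'.
Proof.
case: oL oR oL' oR' => [e1|] [e2|] [e1'|] [e2'|] //.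
- move=> D D'; have D0 := D; have D0' := D'.
  case/Dec_SS: D => h1 h2 h3 s1 s2; case/Dec_SS: D' => h1' h2' h3' s1' s2'.
  have Es : size e1.2 = size e1'.2 by lia.
  move: h2'; rewrite h2 => /eqP; rewrite eqseq_cat // => /andP [/eqP w1 /eqP w2].
  have E1 : e1 = e1' by apply: tile_eq => //; rewrite -h1 -h1'.
  case: D0 => _ _ _ _ [Ee2 _]; case: D0' => _ _ _ _ [Ee2' _].
  subst e1'; split=> //; congr Some; apply: tile_eq => //; by rewrite Ee2 Ee2'.
- move=> /Dec_SS [h1 h2 h3 s1 s2] /Dec_SN [_ h]; rewrite h2 size_cat in h; lia.
- move=> /Dec_SS [h1 h2 h3 s1 s2] /Dec_NS [_ h]; lia.
- move=> /Dec_SN [_ h] /Dec_SS [h1 h2 h3 s1 s2]; rewrite h2 size_cat in h; lia.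
- by move=> /Dec_SN [-> _] /Dec_SN [<- _].
- move=> D /Dec_NS [_ h']; have [_ h] := Dec_SN D; have := valid_size (Dec_valid D); lia.
- move=> /Dec_NS [_ h] /Dec_SS [h1 h2 h3 s1 s2]; lia.
- move=> D /Dec_SN [_ h']; have [_ h] := Dec_NS D; have := valid_size (Dec_valid D); lia.
- by move=> /Dec_NS [-> _] /Dec_NS [<- _].
Qed.

Lemma Dec_fun K g g' oL oR : Dec K g oL oR -> Dec K g' oL oR -> g = g'.
Proof.
case: oL oR => [e1|] [e2|] //.
- by case=> ???? [_ ->] [????[_ ->]].
- by case=> ?? -> [?? ->].
- by case=> ?? -> [?? ->].
Qed.

Definition oin (o : option tile) (S : seq tile) : Prop := if o is Some e then e \in S else True.

Definition Corr (K : int) (T T1 T2 : seq tile) : Prop :=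
  (forall g, g \in T -> exists oL, exists oR, [/\ Dec K g oL oR, oin oL T1 & oin oR T2]) /\
  (forall e1, e1 \in T1 -> exists2 g, g \in T & exists oR, Dec K g (Some e1) oR /\ oin oR T2) /\
  (forall e2, e2 \in T2 -> exists2 g, g \in T & exists oL, Dec K g oL (Some e2) /\ oin oL T1).

Definition MaxP (K : int) (T T1 T2 : seq tile) : Prop :=
  forall e1 e2, e1 \in T1 -> e2 \in T2 -> e2.1 = lastc e1 -> exists2 g, g \in T & Dec K g (Some e1) (Some e2).

Definition InjP (K : int) (T : seq tile) : Prop :=
  (forall g g' e1 oR oR', g \in T -> g' \in T -> Dec K g (Some e1) oR -> Dec K g' (Some e1) oR' -> g = g') /\
  (forall g g' e2 oL oL', g \in T -> g' \in T -> Dec K g oL (Some e2) -> Dec K g' oL' (Some e2) -> g = g').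


Lemma Dec_link K g e1 e2 : Dec K g (Some e1) (Some e2) -> e2.1 = lastc e1.
Proof. by case=> ????[]. Qed.

Lemma Corr_eqT K T T' T1 T2 : Corr K T T1 T2 -> Corr K T' T1 T2 -> MaxP K T T1 T2 -> MaxP K T' T1 T2 ->
  InjP K T -> InjP K T' -> forall g, g \in T -> g \in T'.
Proof.
move=> [C1 _] [_ [C2' C3']] M M' [IL IR] [IL' IR'] g gT.
have [oL [oR [D i1 i2]]] := C1 g gT.
case: oL D i1 => [e1|] D i1.
- have [g' g'T [oR' [D' i2']]] := C2' e1 i1.
  suff E : oR = oR' by move: D'; rewrite -E => D'; rewrite (Dec_fun D D').
  case: oR D i2 => [e2|] D i2; case: oR' D' i2' => [e2'|] D' i2' //.
  + have [g'' g''T D''] := M' e1 e2 i1 i2 (Dec_link D).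
    have := IL' _ _ _ _ _ g'T g''T D' D''; move=> Eg; rewrite Eg in D'.
    by case: (Dec_uniq D' D'') => _ ->.
  + have [g'' g''T D''] := M' e1 e2 i1 i2 (Dec_link D).
    have := IL' _ _ _ _ _ g'T g''T D' D''; move=> Eg; rewrite Eg in D'.
    by case: (Dec_uniq D' D'').
  + have [g'' g''T D''] := M e1 e2' i1 i2' (Dec_link D').
    have := IL _ _ _ _ _ gT g''T D D''; move=> Eg; rewrite Eg in D.
    by case: (Dec_uniq D D'').
- case: oR D i2 => [e2|] D i2 //.
  have [g' g'T [oL' [D' i1']]] := C3' e2 i2.
  suff E : oL' = None by move: D'; rewrite E => D'; rewrite (Dec_fun D D').
  case: oL' D' i1' => [e1'|] D' i1' //.
  have [g'' g''T D''] := M e1' e2 i1' i2 (Dec_link D').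
  have := IR _ _ _ _ _ gT g''T D D''; move=> Eg; rewrite Eg in D.
  by case: (Dec_uniq D D'').
Qed.

Lemma Corr_eqT1 K T T1 T2 T1' T2' : Corr K T T1 T2 -> Corr K T T1' T2' ->
  (forall e, e \in T1 -> e \in T1') /\ (forall e, e \in T2 -> e \in T2').
Proof.
move=> [_ [C2 C3]] [C1' _]; split.
- move=> e1 /C2 [g gT [oR [D _]]]; have [oL' [oR' [D' i1 _]]] := C1' g gT.
  by case: (Dec_uniq D D') => E _; rewrite -E in i1.
- move=> e2 /C3 [g gT [oL [D _]]]; have [oL' [oR' [D' _ i2]]] := C1' g gT.
  by case: (Dec_uniq D D') => _ E; rewrite -E in i2.
Qed.

End P10.
Import P10.

Module P11.
Set Implicit Arguments. Unset Strict Implicit. Unset Printing Implicit Defensive.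
Import Order.TTheory GRing.Theory Num.Theory.
Local Open Scope ring_scope.

Definition PL (R : halfcell -> bool) (K : int) (hc : halfcell) := R hc && (colh hc + 1 <= K).
Definition PR (R : halfcell -> bool) (K : int) (hc : halfcell) := R hc && (K <= colh hc).

Lemma Dec_vL K g e1 oR : Dec K g (Some e1) oR -> valid_tile e1 /\ leftT K e1.
Proof. by case: oR => [e2|]; case. Qed.
Lemma Dec_vR K g oL e2 : Dec K g oL (Some e2) -> valid_tile e2 /\ rightT K e2.
Proof. by case: oL => [e1|]; case. Qed.

Lemma Dec_inL K g e1 oR hc : Dec K g (Some e1) oR -> hc \in thalf e1 -> hc \in thalf g.
Proof. by move=> D h; rewrite (Dec_thalf _ D) /= h. Qed.
Lemma Dec_inR K g oL e2 hc : Dec K g oL (Some e2) -> hc \in thalf e2 -> hc \in thalf g.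
Proof. by move=> D h; rewrite (Dec_thalf _ D) /= h orbT. Qed.

Lemma Dec_firstL K g e1 oR : Dec K g (Some e1) oR -> g.1 = e1.1.
Proof. by case: oR => [e2|]; [case=> ????[_ ->] | case=> ?? ->]. Qed.
Lemma Dec_lastR K g oL e2 : Dec K g oL (Some e2) -> lastc g = lastc e2.
Proof. by case: oL => [e1|]; [case=> ????[E ->]; rewrite glue_lastc | case=> ?? ->]. Qed.
Lemma Dec_lastL K g e1 oR : Dec K g (Some e1) oR -> lastc g = lastc e1 \/ ct (lastc e1) = K - 1.
Proof.
case: oR => [e2|] D; last by case: D => ?? ->; left.
right; have [h1 h2 h3 s1 s2] := Dec_SS D; rewrite lastc_ct -h1; lia.
Qed.
Lemma Dec_firstR K g oL e2 : Dec K g oL (Some e2) -> g.1 = e2.1 \/ ct e2.1 = K - 1.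
Proof.
case: oL => [e1|] D; last by case: D => ?? ->; left.
right; have [h1 h2 h3 s1 s2] := Dec_SS D; rewrite (Dec_link D) lastc_ct -h1; lia.
Qed.

Lemma dg_first_in (g : tile) : dg g.1 \in diags g.
Proof. by rewrite diagsE tcell0 mem_head. Qed.
Lemma dg_last_in g : dg (lastc g) \in diags g.
Proof. by rewrite diagsE !inE eqxx orbT. Qed.

Lemma has_diags (e f : tile) : has (fun d => d \in diags f) (diags e) ->
  exists a, exists b, [/\ a = e.1 \/ a = lastc e, b = f.1 \/ b = lastc f & a = b].
Proof.
case/hasP => d; rewrite !diagsE !tcell0 !inE => Hd Hf.
case/orP: Hd => /eqP Ed; case/orP: Hf => /eqP Ef; rewrite Ed in Ef; move/dg_inj: Ef => Ef.
- by exists e.1, f.1; split; by [left|left|].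
- by exists e.1, (lastc f); split; by [left|right|].
- by exists (lastc e), f.1; split; by [right|left|].
- by exists (lastc e), (lastc f); split; by [right|right|].
Qed.

Lemma tiling_disj P T g g' hc : tiling P T -> g \in T -> g' \in T -> hc \in thalf g -> hc \in thalf g' -> g = g'.
Proof.
case=> _ [_ [h3 _]] gT g'T H H'; apply/eqP; apply: contraT => ne.
by have := h3 _ _ gT g'T ne => /hasPn /(_ _ H); rewrite H'.
Qed.

Lemma tiling_diag P T g g' a b : tiling P T -> g \in T -> g' \in T ->
  (a = g.1 \/ a = lastc g) -> (b = g'.1 \/ b = lastc g') -> a = b -> g = g'.
Proof.
case=> _ [_ [_ [_ h5]]] gT g'T Ha Hb Eab; apply/eqP; apply: contraT => ne.
have := h5 _ _ gT g'T ne => /hasPn /(_ (dg a)) H.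
have Ha' : dg a \in diags g by case: Ha => ->; [apply: dg_first_in | apply: dg_last_in].
have Hb' : dg a \in diags g' by rewrite Eab; case: Hb => ->; [apply: dg_first_in | apply: dg_last_in].
by move: (H Ha'); rewrite Hb'.
Qed.

Lemma leftT_first K e : valid_tile e -> leftT K e -> ct e.1 + 2 <= K.
Proof. move=> v; rewrite (leftTE _ v); have := valid_size v; lia. Qed.
Lemma rightT_last K e : valid_tile e -> rightT K e -> K <= ct (lastc e).
Proof. move=> v; rewrite (rightTE _ v) lastc_ct; have := valid_size v; lia. Qed.

Lemma Th1L R K T T1 T2 : Corr K T T1 T2 -> tiling R T -> tiling (PL R K) T1.
Proof.
move=> [C1 [C2 C3]] HT.
split; [|split;[|split;[|split]]].
- by move=> e1 /C2 [g gT [oR [D _]]]; exact: (Dec_vL D).1.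
- move=> e1 /C2 [g gT [oR [D _]]]; apply/allP => hc H.
  rewrite /PL (tiling_in HT gT (Dec_inL D H)) /=; have [_ /allP L] := Dec_vL D; exact: L.
- move=> e1 f1 /C2 [g gT [oR [D _]]] /C2 [g' g'T [oR' [D' _]]] ne.
  apply/hasPn => hc H; apply/negP => H'.
  have E := tiling_disj HT gT g'T (Dec_inL D H) (Dec_inL D' H'); rewrite -E in D'.
  have [E1 _] := Dec_uniq D D'; case: E1 => E1; by rewrite E1 eqxx in ne.
- move=> e1 e1T; have [g gT [oR [D _]]] := C2 _ e1T.
  case/hasP => hc Hs /andP [Rhc Lhc].
  have Ds := Dec_shift D.
  have Hg : hc \in thalf (shift_tile g) := Dec_inL Ds Hs.
  have [_ [_ [_ [h4 _]]]] := HT.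
  have [f fT /andP [nf /allP Hf]] := h4 g gT (introT hasP (ex_intro2 _ _ hc Hg Rhc)).
  have [oL' [oR' [D' i1 _]]] := C1 f fT.
  have hcf := Hf hc Hg.
  have := Dec_left D' hcf Lhc.
  case: oL' D' i1 => [f1|] D' i1 // hcf1.
  exists f1 => //; apply/andP; split.
  + apply: contraT => /negPn /eqP E; rewrite E in hcf1.
    have E' := tiling_disj HT gT fT (Dec_inL D hcf1) hcf.
    by rewrite E' eqxx in nf.
  + apply/allP => hc' Hs'; have Hg' := Dec_inL Ds Hs'.
    have L' := Dec_oL Ds (Hs' : hc' \in ohalf (Some (shift_tile e1))).
    exact: Dec_left D' (Hf _ Hg') L'.
- move=> e1 f1 /C2 [g gT [oR [D _]]] /C2 [g' g'T [oR' [D' _]]] ne.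
  have gne : g <> g'.
    move=> E; rewrite -E in D'; have [E1 _] := Dec_uniq D D'; case: E1 => E1; by rewrite E1 eqxx in ne.
  have [v1 l1] := Dec_vL D; have [v1' l1'] := Dec_vL D'.
  apply/negP => /has_diags [a [b [Ha Hb Eab]]].
  case: Ha => Ha; case: Hb => Hb.
  + apply: gne; apply: (tiling_diag HT gT g'T (a := a) (b := b)) => //.
      by left; rewrite Ha (Dec_firstL D).
    by left; rewrite Hb (Dec_firstL D').
  + case: (Dec_lastL D') => Hl.
      apply: gne; apply: (tiling_diag HT gT g'T (a := a) (b := b)) => //.
        by left; rewrite Ha (Dec_firstL D).
      by right; rewrite Hb Hl.
    have := leftT_first v1 l1; rewrite -Ha Eab Hb Hl; lia.
  + case: (Dec_lastL D) => Hl.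
      apply: gne; apply: (tiling_diag HT gT g'T (a := a) (b := b)) => //.
        by right; rewrite Ha Hl.
      by left; rewrite Hb (Dec_firstL D').
    have := leftT_first v1' l1'; rewrite -Hb -Eab Ha Hl; lia.
  + apply: gne; apply: (tiling_disj HT gT g'T (hc := (a, false))).
      by apply: (Dec_inL D); rewrite Ha; apply: last_in.
    by apply: (Dec_inL D'); rewrite Eab Hb; apply: last_in.
Qed.

Lemma Th1R R K T T1 T2 : Corr K T T1 T2 -> tiling R T -> tiling (PR R K) T2.
Proof.
move=> [C1 [C2 C3]] HT.
split; [|split;[|split;[|split]]].
- by move=> e2 /C3 [g gT [oL [D _]]]; exact: (Dec_vR D).1.
- move=> e2 /C3 [g gT [oL [D _]]]; apply/allP => hc H.
  rewrite /PR (tiling_in HT gT (Dec_inR D H)) /=; have [_ /allP L] := Dec_vR D; exact: L.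
- move=> e2 f2 /C3 [g gT [oL [D _]]] /C3 [g' g'T [oL' [D' _]]] ne.
  apply/hasPn => hc H; apply/negP => H'.
  have E := tiling_disj HT gT g'T (Dec_inR D H) (Dec_inR D' H'); rewrite -E in D'.
  have [_ E1] := Dec_uniq D D'; case: E1 => E1; by rewrite E1 eqxx in ne.
- move=> e2 e2T; have [g gT [oL [D _]]] := C3 _ e2T.
  case/hasP => hc Hs /andP [Rhc Lhc].
  have Ds := Dec_shift D.
  have Hg : hc \in thalf (shift_tile g) := Dec_inR Ds Hs.
  have [_ [_ [_ [h4 _]]]] := HT.
  have [f fT /andP [nf /allP Hf]] := h4 g gT (introT hasP (ex_intro2 _ _ hc Hg Rhc)).
  have [oL' [oR' [D' _ i2]]] := C1 f fT.
  have hcf := Hf hc Hg.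
  have := Dec_right D' hcf Lhc.
  case: oR' D' i2 => [f2|] D' i2 // hcf2.
  exists f2 => //; apply/andP; split.
  + apply: contraT => /negPn /eqP E; rewrite E in hcf2.
    have E' := tiling_disj HT gT fT (Dec_inR D hcf2) hcf.
    by rewrite E' eqxx in nf.
  + apply/allP => hc' Hs'; have Hg' := Dec_inR Ds Hs'.
    have L' := Dec_oR Ds (Hs' : hc' \in ohalf (Some (shift_tile e2))).
    exact: Dec_right D' (Hf _ Hg') L'.
- move=> e2 f2 /C3 [g gT [oL [D _]]] /C3 [g' g'T [oL' [D' _]]] ne.
  have gne : g <> g'.
    move=> E; rewrite -E in D'; have [_ E1] := Dec_uniq D D'; case: E1 => E1; by rewrite E1 eqxx in ne.
  have [v2 r2] := Dec_vR D; have [v2' r2'] := Dec_vR D'.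
  apply/negP => /has_diags [a [b [Ha Hb Eab]]].
  case: Ha => Ha; case: Hb => Hb.
  + apply: gne; apply: (tiling_disj HT gT g'T (hc := (a, true))).
      by apply: (Dec_inR D); rewrite Ha; apply: first_in.
    by apply: (Dec_inR D'); rewrite Eab Hb; apply: first_in.
  + case: (Dec_firstR D) => Hl.
      apply: gne; apply: (tiling_diag HT gT g'T (a := a) (b := b)) => //.
        by left; rewrite Ha Hl.
      by right; rewrite Hb (Dec_lastR D').
    have := rightT_last v2' r2'; rewrite -Hb -Eab Ha Hl; lia.
  + case: (Dec_firstR D') => Hl.
      apply: gne; apply: (tiling_diag HT gT g'T (a := a) (b := b)) => //.
        by right; rewrite Ha (Dec_lastR D).
      by left; rewrite Hb Hl.
    have := rightT_last v2 r2; rewrite -Ha Eab Hb Hl; lia.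
  + apply: gne; apply: (tiling_diag HT gT g'T (a := a) (b := b)) => //.
      by right; rewrite Ha (Dec_lastR D).
    by right; rewrite Hb (Dec_lastR D').
Qed.

Lemma Th1Inj R K T T1 T2 : Corr K T T1 T2 -> tiling R T -> InjP K T.
Proof.
move=> _ HT; split.
- move=> g g' e1 oR oR' gT g'T D D'; have [v _] := Dec_vL D.
  exact: (tiling_disj HT gT g'T (Dec_inL D (first_in v)) (Dec_inL D' (first_in v))).
- move=> g g' e2 oL oL' gT g'T D D'; have [v _] := Dec_vR D.
  exact: (tiling_disj HT gT g'T (Dec_inR D (first_in v)) (Dec_inR D' (first_in v))).
Qed.

Lemma Th1Max R K T T1 T2 : Corr K T T1 T2 -> tiling R T -> MaxP K T T1 T2.
Proof.
move=> C HT; have [C1 [C2 C3]] := C.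
have H2 := Th1R C HT; have H1 := Th1L C HT; have [IL IR] := Th1Inj C HT.
move=> e1 e2 e1T e2T E.
have v1 := tiling_valid H1 e1T; have v2 := tiling_valid H2 e2T.
have [g gT [oR [D i2]]] := C2 _ e1T.
case: oR D i2 => [e2'|] D i2.
  suff -> : e2 = e2' by exists g.
  have v2' := tiling_valid H2 i2.
  apply: (tiling_disj H2 e2T i2 (first_in v2)).
  by rewrite E -(Dec_link D); apply: first_in.
have [g' g'T [oL' [D' i1']]] := C3 _ e2T.
case: oL' D' i1' => [e1'|] D' i1'.
  have v1' := tiling_valid H1 i1'.
  have E1 : e1 = e1'.
    apply: (tiling_disj H1 e1T i1' (last_in v1)).
    by rewrite -E (Dec_link D'); apply: last_in.
  rewrite -E1 in D'; have Eg := IL _ _ _ _ _ gT g'T D D'; rewrite Eg in D.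
  by case: (Dec_uniq D D').
have Eg : g = g'.
  apply: (tiling_diag HT gT g'T (a := lastc e1) (b := e2.1)) => //.
    by right; case: D => ?? ->.
  by left; case: D' => ?? ->.
rewrite Eg in D; by case: (Dec_uniq D D').
Qed.

End P11.
Import P11.

Module P12.
Set Implicit Arguments. Unset Strict Implicit. Unset Printing Implicit Defensive.
Import Order.TTheory GRing.Theory Num.Theory.
Local Open Scope ring_scope.

Lemma cornerRL lam mu a (K : nat) c : hgt lam K = 0 -> ct c = K%:Z - 1 ->
  hc_in lam mu a (sh c, false) -> hc_in lam mu a (c, true) -> hc_in lam mu a (sh c, true).
Proof.
move=> HK Hc; rewrite !hcF !hcT sh_t sh_h => /and3P [p1 p2 p3] /and3P [q1 q2 q3].
apply/and3P; split.
- exact: p2.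
- exact: p3.
- move: p2 q3; rewrite /ptq => /and4P [a1 a2 a3 a4] /and4P [b1 b2 b3 b4].
  have EK : absz (ct c + 1) = K by lia.
  have EK1 : absz (ct c + 2) = K.+1 by lia.
  rewrite EK HK in a3; rewrite EK1 in b3 b4 *.
  have := hgt_step lam K; rewrite HK => hs.
  apply/and4P; split => //; lia.
Qed.

Lemma cornerRR lam mu a (K : nat) c : hgt lam K = 0 -> ct c = K%:Z - 1 ->
  hc_in lam mu a (sh c, true) -> hc_in lam mu a (c, false) -> hc_in lam mu a (sh c, false).
Proof.
move=> HK Hc; rewrite !hcF !hcT sh_t sh_h => /and3P [p1 p2 p3] /and3P [q1 q2 q3].
apply/and3P; split.
- move: p1 q1; rewrite /ptq => /and4P [a1 a2 a3 a4] /and4P [b1 b2 b3 b4].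
  have EK : absz (ct c + 1) = K by lia.
  rewrite EK HK in a3.
  have Kpos : (0 < K)%N by lia.
  have EK1 : (absz (ct c)).+1 = K by lia.
  have := hgt_step lam (absz (ct c)); rewrite EK1 HK => hs.
  apply/and4P; split => //; lia.
- exact: p1.
- exact: p2.
Qed.

End P12.
Import P12.

Module P13.
Set Implicit Arguments. Unset Strict Implicit. Unset Printing Implicit Defensive.
Import Order.TTheory GRing.Theory Num.Theory.
Local Open Scope ring_scope.

Lemma last_of_left K f x : valid_tile f -> leftT K f -> (x, false) \in thalf f -> ct x = K - 1 -> x = lastc f.
Proof.
move=> v l; have s := valid_size v; case/(mem_thalf _ _ s) => j [hj ->] hc.
case: (ltnP j (size f.2)) => hj2; last by rewrite /lastc; congr tcell; lia.
have := in_thalfT v hj2; move/allP: l => l /l; rewrite /colh /=; lia.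
Qed.

Lemma first_of_right K f x : valid_tile f -> rightT K f -> (x, true) \in thalf f -> ct x = K - 1 -> x = f.1.
Proof.
move=> v l; have s := valid_size v; case/(mem_thalf _ _ s) => j [hj ->] hc.
case: j hj hc => [|j] hj hc; first by rewrite tcell0.
have hj' : (0 < j.+1 <= size f.2)%N by lia.
have := in_thalfF v hj'; move/allP: l => l /l; rewrite /colh /=; lia.
Qed.

Lemma Dec_ends K g oL oR a : Dec K g oL oR -> (a = g.1 \/ a = lastc g) ->
  (exists e1, oL = Some e1 /\ (a = e1.1 \/ (a = lastc e1 /\ oR = None))) \/
  (exists e2, oR = Some e2 /\ (a = lastc e2 \/ (a = e2.1 /\ oL = None))).
Proof.
case: oL oR => [e1|] [e2|] //.
- move=> D [] ->.
  + by left; exists e1; split=> //; left; rewrite (Dec_firstL D).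
  + by right; exists e2; split=> //; left; rewrite (Dec_lastR D).
- by case=> _ _ -> [] ->; left; exists e1; split=> //; [left|right].
- by case=> _ _ -> [] ->; right; exists e2; split=> //; [right|left].
Qed.

Lemma piece_bounds_L K e1 a : valid_tile e1 -> leftT K e1 -> (a = e1.1 \/ a = lastc e1) -> ct a + 1 <= K.
Proof. move=> v l; have := leftT_first v l; rewrite (leftTE _ v) in l => h1; case=> ->; rewrite ?lastc_ct; lia. Qed.
Lemma piece_bounds_R K e2 a : valid_tile e2 -> rightT K e2 -> (a = e2.1 \/ a = lastc e2) -> K <= ct a + 1.
Proof. move=> v l; have := rightT_last v l; rewrite (rightTE _ v) in l => h1; case=> ->; rewrite ?lastc_ct in h1 *; lia. Qed.

Lemma tiling_leftT R K T e : tiling (PL R K) T -> e \in T -> leftT K e.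
Proof. by move=> H eT; apply/allP => hc /(tiling_in H eT) /andP []. Qed.
Lemma tiling_rightT R K T e : tiling (PR R K) T -> e \in T -> rightT K e.
Proof. by move=> H eT; apply/allP => hc /(tiling_in H eT) /andP []. Qed.

Lemma Th2 lam mu a (K : nat) T T1 T2 : hgt lam K = 0 ->
  Corr K%:Z T T1 T2 -> MaxP K%:Z T T1 T2 -> InjP K%:Z T ->
  tiling (PL (hc_in lam mu a) K%:Z) T1 -> tiling (PR (hc_in lam mu a) K%:Z) T2 ->
  tiling (hc_in lam mu a) T.
Proof.
set R := hc_in lam mu a.
move=> HK [C1 [C2 C3]] Mx [IL IR] H1 H2.
split; [|split;[|split;[|split]]].
- by move=> g /C1 [oL [oR [D _ _]]]; exact: Dec_valid D.
- move=> g /C1 [oL [oR [D i1 i2]]]; apply/allP => hc; rewrite (Dec_thalf _ D) => /orP [].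
  + case: oL D i1 => [e1|] D i1 // H; by have := tiling_in H1 i1 H => /andP [].
  + case: oR D i2 => [e2|] D i2 // H; by have := tiling_in H2 i2 H => /andP [].
- move=> g g' gT g'T ne; have [oL [oR [D i1 i2]]] := C1 g gT; have [oL' [oR' [D' i1' i2']]] := C1 g' g'T.
  apply/hasPn => hc H; apply/negP => H'.
  case: (leP (colh hc + 1) K%:Z) => side.
  + have := Dec_left D H side; have := Dec_left D' H' side.
    case: oL D i1 => [e1|] D i1 //; case: oL' D' i1' => [e1'|] D' i1' // h' h.
    have E := tiling_disj H1 i1 i1' h h'; rewrite E in D.
    by move/eqP: ne; apply; apply: IL gT g'T D D'.
  + have side' : K%:Z <= colh hc by lia.
    have := Dec_right D H side'; have := Dec_right D' H' side'.
    case: oR D i2 => [e2|] D i2 //; case: oR' D' i2' => [e2'|] D' i2' // h' h.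
    have E := tiling_disj H2 i2 i2' h h'; rewrite E in D.
    by move/eqP: ne; apply; apply: IR gT g'T D D'.
- move=> g gT; have [oL [oR [D i1 i2]]] := C1 g gT.
  case/hasP => hc Hs Rhc.
  have Ds := Dec_shift D.
  case: (leP (colh hc + 1) K%:Z) => side.
  + have := Dec_left Ds Hs side.
    case: oL D i1 Ds => [e1|] D i1 Ds // hs1.
    have [_ [_ [_ [h4 _]]]] := H1.
    have PLhc : PL R K%:Z hc by rewrite /PL Rhc side.
    have [f1 f1T /andP [nf1 /allP Hf1]] := h4 e1 i1 (introT hasP (ex_intro2 _ _ hc hs1 PLhc)).
    have [v1 l1] := Dec_vL D.
    case: oR D i2 Ds => [e2|] D i2 Ds.
    * have [v2 r2] := Dec_vR D.
      have Ec : e2.1 = lastc e1 := Dec_link D.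
      have hcK : ct (lastc e1) = K%:Z - 1.
        have [h1 _ h3 _ _] := Dec_SS D; rewrite lastc_ct -h1; clear -h3; lia.
      have s1 : (sh (lastc e1), false) \in thalf (shift_tile e1) := in_shift (last_in v1).
      have Rs1 : R (sh (lastc e1), false) by have := tiling_in H1 f1T (Hf1 _ s1) => /andP [].
      have Rc : R (lastc e1, true).
        have hin : (lastc e1, true) \in thalf e2 by rewrite -Ec; apply: first_in.
        by have := tiling_in H2 i2 hin => /andP [].
      have Rs2 := cornerRL HK hcK Rs1 Rc.
      have s2 : (sh (lastc e1), true) \in thalf (shift_tile e2).
        by apply: in_shift; rewrite -Ec; apply: first_in.
      have [_ [_ [_ [h4' _]]]] := H2.
      have PRs2 : PR R K%:Z (sh (lastc e1), true) by apply/andP; split; [exact: Rs2 | rewrite colh_sh /colh /=; clear -hcK; lia].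
      have [f2 f2T /andP [nf2 /allP Hf2]] := h4' e2 i2 (introT hasP (ex_intro2 _ _ (sh (lastc e1), true) s2 PRs2)).
      have vf1 := tiling_valid H1 f1T; have vf2 := tiling_valid H2 f2T.
      have lf1 := tiling_leftT H1 f1T; have rf2 := tiling_rightT H2 f2T.
      have E1 : sh (lastc e1) = lastc f1 by apply: (last_of_left vf1 lf1 (Hf1 _ s1)); rewrite sh_t; exact: hcK.
      have E2 : sh (lastc e1) = f2.1 by apply: (first_of_right vf2 rf2 (Hf2 _ s2)); rewrite sh_t; exact: hcK.
      have Ef12 : f2.1 = lastc f1 by rewrite -E2 -E1.
      have [f fT Df] := Mx f1 f2 f1T f2T Ef12.
      exists f => //; apply/andP; split.
      - apply/negP => /eqP Ef; rewrite Ef in Df; case: (Dec_uniq Df D) => [[E]] _.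
        by rewrite E eqxx in nf1.
      - apply/allP => hc'; rewrite (Dec_thalf _ Ds) => /orP [] h.
          by apply: (Dec_inL Df); exact: Hf1.
        by apply: (Dec_inR Df); exact: Hf2.
    * have [f fT [oRf [Df _]]] := C2 f1 f1T.
      exists f => //; apply/andP; split.
      - apply/negP => /eqP Ef; rewrite Ef in Df; case: (Dec_uniq Df D) => [[E]] _.
        by rewrite E eqxx in nf1.
      - apply/allP => hc'; rewrite (Dec_thalf _ Ds) orbF => h.
        by apply: (Dec_inL Df); exact: Hf1.
  + have side' : K%:Z <= colh hc by clear -side; lia.
    have := Dec_right Ds Hs side'.
    case: oR D i2 Ds => [e2|] D i2 Ds // hs2.
    have [_ [_ [_ [h4 _]]]] := H2.
    have PRhc : PR R K%:Z hc by rewrite /PR Rhc side'.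
    have [f2 f2T /andP [nf2 /allP Hf2]] := h4 e2 i2 (introT hasP (ex_intro2 _ _ hc hs2 PRhc)).
    have [v2 r2] := Dec_vR D.
    case: oL D i1 Ds => [e1|] D i1 Ds.
    * have [v1 l1] := Dec_vL D.
      have Ec : e2.1 = lastc e1 := Dec_link D.
      have hcK : ct (lastc e1) = K%:Z - 1.
        have [h1 _ h3 _ _] := Dec_SS D; rewrite lastc_ct -h1; clear -h3; lia.
      have s2 : (sh (lastc e1), true) \in thalf (shift_tile e2).
        by apply: in_shift; rewrite -Ec; apply: first_in.
      have Rs2 : R (sh (lastc e1), true) by have := tiling_in H2 f2T (Hf2 _ s2) => /andP [].
      have Rc : R (lastc e1, false) by have := tiling_in H1 i1 (last_in v1) => /andP [].
      have Rs1 := cornerRR HK hcK Rs2 Rc.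
      have s1 : (sh (lastc e1), false) \in thalf (shift_tile e1) := in_shift (last_in v1).
      have [_ [_ [_ [h4' _]]]] := H1.
      have PLs1 : PL R K%:Z (sh (lastc e1), false) by apply/andP; split; [exact: Rs1 | rewrite colh_sh /colh /=; clear -hcK; lia].
      have [f1 f1T /andP [nf1 /allP Hf1]] := h4' e1 i1 (introT hasP (ex_intro2 _ _ (sh (lastc e1), false) s1 PLs1)).
      have vf1 := tiling_valid H1 f1T; have vf2 := tiling_valid H2 f2T.
      have lf1 := tiling_leftT H1 f1T; have rf2 := tiling_rightT H2 f2T.
      have E1 : sh (lastc e1) = lastc f1 by apply: (last_of_left vf1 lf1 (Hf1 _ s1)); rewrite sh_t; exact: hcK.
      have E2 : sh (lastc e1) = f2.1 by apply: (first_of_right vf2 rf2 (Hf2 _ s2)); rewrite sh_t; exact: hcK.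
      have Ef12 : f2.1 = lastc f1 by rewrite -E2 -E1.
      have [f fT Df] := Mx f1 f2 f1T f2T Ef12.
      exists f => //; apply/andP; split.
      - apply/negP => /eqP Ef; rewrite Ef in Df; case: (Dec_uniq Df D) => _ [E].
        by rewrite E eqxx in nf2.
      - apply/allP => hc'; rewrite (Dec_thalf _ Ds) => /orP [] h.
          by apply: (Dec_inL Df); exact: Hf1.
        by apply: (Dec_inR Df); exact: Hf2.
    * have [f fT [oLf [Df _]]] := C3 f2 f2T.
      exists f => //; apply/andP; split.
      - apply/negP => /eqP Ef; rewrite Ef in Df; case: (Dec_uniq Df D) => _ [E].
        by rewrite E eqxx in nf2.
      - apply/allP => hc'; rewrite (Dec_thalf _ Ds) /= => h.
        by apply: (Dec_inR Df); exact: Hf2.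
- move=> g g' gT g'T ne; have [oL [oR [D i1 i2]]] := C1 g gT; have [oL' [oR' [D' i1' i2']]] := C1 g' g'T.
  apply/negP => /has_diags [x [y [Hx Hy Exy]]].
  have gne : g <> g' by move=> E; rewrite E eqxx in ne.
  case: (Dec_ends D Hx) => [[e1 [EL Hx1]] | [e2 [ER Hx2]]];
  case: (Dec_ends D' Hy) => [[e1' [EL' Hy1]] | [e2' [ER' Hy2]]].
  + rewrite EL in D i1; rewrite EL' in D' i1'.
    have E1 : e1 = e1'.
      apply: (tiling_diag H1 i1 i1' (a := x) (b := y)) => //.
        by case: Hx1 => [->|[-> _]]; [left|right].
      by case: Hy1 => [->|[-> _]]; [left|right].
    by rewrite E1 in D; apply: gne; apply: IL gT g'T D D'.
  + rewrite EL in D i1; rewrite ER' in D' i2'.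
    have [v1 l1] := Dec_vL D; have [v2 r2] := Dec_vR D'.
    have bL1 := leftT_first v1 l1; have bR2 := rightT_last v2 r2.
    have bL2 : ct (lastc e1) + 1 <= K%:Z by have := leftTE K%:Z v1; rewrite l1 lastc_ct; lia.
    have bR1 : K%:Z <= ct e2'.1 + 1 by have := rightTE K%:Z v2; rewrite r2; lia.
    case: Hx1 => [Ex|[Ex EoR]].
      by case: Hy2 => [Ey|[Ey _]]; have := congr1 ct Exy; rewrite Ex Ey; lia.
    case: Hy2 => [Ey|[Ey EoL']].
      by have := congr1 ct Exy; rewrite Ex Ey; lia.
    rewrite EoR in D; rewrite EoL' in D'.
    have Ec : e2'.1 = lastc e1 by rewrite -Ey -Exy Ex.
    have [g'' g''T D''] := Mx e1 e2' i1 i2' Ec.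
    have := IL _ _ _ _ _ gT g''T D D''; move=> Eg; rewrite Eg in D.
    by case: (Dec_uniq D D'').
  + rewrite ER in D i2; rewrite EL' in D' i1'.
    have [v2 r2] := Dec_vR D; have [v1 l1] := Dec_vL D'.
    have bL1 := leftT_first v1 l1; have bR2 := rightT_last v2 r2.
    have bL2 : ct (lastc e1') + 1 <= K%:Z by have := leftTE K%:Z v1; rewrite l1 lastc_ct; lia.
    have bR1 : K%:Z <= ct e2.1 + 1 by have := rightTE K%:Z v2; rewrite r2; lia.
    case: Hy1 => [Ey|[Ey EoR']].
      by case: Hx2 => [Ex|[Ex _]]; have := congr1 ct Exy; rewrite Ex Ey; lia.
    case: Hx2 => [Ex|[Ex EoL]].
      by have := congr1 ct Exy; rewrite Ex Ey; lia.
    rewrite EoR' in D'; rewrite EoL in D.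
    have Ec : e2.1 = lastc e1' by rewrite -Ey -Exy Ex.
    have [g'' g''T D''] := Mx e1' e2 i1' i2 Ec.
    have := IL _ _ _ _ _ g'T g''T D' D''; move=> Eg; rewrite Eg in D'.
    by case: (Dec_uniq D' D'').
  + rewrite ER in D i2; rewrite ER' in D' i2'.
    have E2 : e2 = e2'.
      apply: (tiling_diag H2 i2 i2' (a := x) (b := y)) => //.
        by case: Hx2 => [->|[-> _]]; [right|left].
      by case: Hy2 => [->|[-> _]]; [right|left].
    by rewrite E2 in D; apply: gne; apply: IR gT g'T D D'.
Qed.

End P13.
Import P13.

Module P14.
Set Implicit Arguments. Unset Strict Implicit. Unset Printing Implicit Defensive.
Import Order.TTheory GRing.Theory Num.Theory.
Local Open Scope ring_scope.

Definition ck (K : int) (e : tile) : nat := absz (K - ct e.1 - 1)%R.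
Definition cutL (K : int) (e : tile) : option tile :=
  if ct e.1 + (size e.2)%:Z + 1 <= K then Some e else if K <= ct e.1 + 1 then None else Some (pre (ck K e) e).
Definition cutR (K : int) (e : tile) : option tile :=
  if K <= ct e.1 + 1 then Some e else if ct e.1 + (size e.2)%:Z + 1 <= K then None else Some (suf (ck K e) e).

Lemma Dec_cut K e : valid_tile e ->
  (ct e.1 + 1 < K -> K < ct e.1 + (size e.2)%:Z + 1 -> hgt e.2 (ck K e) = 0) ->
  Dec K e (cutL K e) (cutR K e).
Proof.
move=> v Hz; have s := valid_size v; rewrite /cutL /cutR.
case: (leP (ct e.1 + (size e.2)%:Z + 1) K) => h1.
  have -> : (K <= ct e.1 + 1) = false by apply/negbTE; rewrite -ltNge; lia.
  by split=> //; rewrite (leftTE _ v).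
case: (leP K (ct e.1 + 1)) => h2.
  by split=> //; rewrite (rightTE _ v).
have hk0 : (0 < ck K e)%N by rewrite /ck; lia.
have hk1 : (ck K e < size e.2)%N by rewrite /ck; lia.
have hz := Hz h2 h1.
have vp := pre_valid v hk0 (ltnW hk1) hz.
have vs := suf_valid v hk1 hz.
split=> //.
- by rewrite (leftTE _ vp) pre_size ?(ltnW hk1) //= /ck; lia.
- rewrite (rightTE _ vs) /suf /= tcell_t /ck; lia.
- split; first by apply: suf_first; apply: ltnW.
  by rewrite glue_pre_suf.
Qed.

Lemma Corr_cut K T : (forall e, e \in T -> Dec K e (cutL K e) (cutR K e)) ->
  Corr K T (pmap (cutL K) T) (pmap (cutR K) T).
Proof.
move=> HD; split; [|split].
- move=> g gT; exists (cutL K g), (cutR K g); split; first exact: HD.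
  + by case E: (cutL K g) => [e1|] //=; rewrite mem_pmap -E; apply: map_f.
  + by case E: (cutR K g) => [e2|] //=; rewrite mem_pmap -E; apply: map_f.
- move=> e1; rewrite mem_pmap => /mapP [g gT E]; exists g => //; exists (cutR K g); split.
    by rewrite E; apply: HD.
  by case E': (cutR K g) => [e2|] //=; rewrite mem_pmap -E'; apply: map_f.
- move=> e2; rewrite mem_pmap => /mapP [g gT E]; exists g => //; exists (cutL K g); split.
    by rewrite E; apply: HD.
  by case E': (cutL K g) => [e1|] //=; rewrite mem_pmap -E'; apply: map_f.
Qed.

End P14.
Import P14.

Module P15.
Set Implicit Arguments. Unset Strict Implicit. Unset Printing Implicit Defensive.
Import Order.TTheory GRing.Theory Num.Theory.
Local Open Scope ring_scope.

Definition partner (T2 : seq tile) (e1 : tile) : option tile :=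
  ohead [seq f <- T2 | f.1 == lastc e1].
Definition mergeL (T2 : seq tile) (e1 : tile) : tile :=
  if partner T2 e1 is Some f then glue e1 f else e1.
Definition unmatched (T1 : seq tile) (f : tile) : bool := ~~ has (fun e => lastc e == f.1) T1.
Definition tmerge (T1 T2 : seq tile) : seq tile :=
  map (mergeL T2) T1 ++ [seq f <- T2 | unmatched T1 f].

Lemma partnerP T2 e1 : (exists2 f, partner T2 e1 = Some f & f \in T2 /\ f.1 = lastc e1) \/
  (partner T2 e1 = None /\ forall f, f \in T2 -> f.1 <> lastc e1).
Proof.
rewrite /partner; case E: [seq f <- T2 | f.1 == lastc e1] => [|f s] /=.
- right; split=> // f fT Ef; have : f \in [seq f <- T2 | f.1 == lastc e1] by rewrite mem_filter Ef eqxx.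
  by rewrite E.
- left; exists f => //; have : f \in [seq f <- T2 | f.1 == lastc e1] by rewrite E mem_head.
  by rewrite mem_filter => /andP [/eqP -> ->].
Qed.

Lemma partner_some T2 e f : partner T2 e = Some f -> f \in T2 /\ f.1 = lastc e.
Proof. by case: (partnerP T2 e) => [[f' -> H] [<-]|[-> _]]. Qed.

Lemma partner_eq K R T2 e1 f : tiling (PR R K) T2 -> f \in T2 -> f.1 = lastc e1 -> partner T2 e1 = Some f.
Proof.
move=> H2 fT Ef; case: (partnerP T2 e1) => [[f' -> [f'T Ef']]|[_ /(_ f fT)]] //.
congr Some; apply: (tiling_disj H2 f'T fT (hc := (lastc e1, true))).
- by rewrite -Ef'; apply: first_in; apply: (tiling_valid H2 f'T).
- by rewrite -Ef; apply: first_in; apply: (tiling_valid H2 fT).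
Qed.

Lemma Dec_mergeL K R T1 T2 e1 : tiling (PL R K) T1 -> tiling (PR R K) T2 -> e1 \in T1 ->
  Dec K (mergeL T2 e1) (Some e1) (partner T2 e1) /\ oin (partner T2 e1) T2.
Proof.
move=> H1 H2 e1T; have v1 := tiling_valid H1 e1T; have l1 := tiling_leftT H1 e1T.
rewrite /mergeL; case: (partnerP T2 e1) => [[f -> [fT Ef]]|[-> _]] //.
split=> //; split=> //; [exact: (tiling_valid H2 fT) | exact: (tiling_rightT H2 fT)].
Qed.

Lemma mem_merge K R T1 T2 g : tiling (PL R K) T1 -> tiling (PR R K) T2 -> g \in tmerge T1 T2 ->
  (exists2 e1, e1 \in T1 & g = mergeL T2 e1) \/ (g \in T2 /\ unmatched T1 g).
Proof.
move=> H1 H2; rewrite mem_cat => /orP [/mapP [e1 e1T ->]|]; first by left; exists e1.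
by rewrite mem_filter => /andP [u gT]; right.
Qed.

Lemma Dec_unm K R T2 f : tiling (PR R K) T2 -> f \in T2 -> Dec K f None (Some f).
Proof. by move=> H2 fT; split=> //; [exact: (tiling_valid H2 fT) | exact: (tiling_rightT H2 fT)]. Qed.

Lemma merge_props K R T1 T2 : tiling (PL R K) T1 -> tiling (PR R K) T2 ->
  [/\ Corr K (tmerge T1 T2) T1 T2, MaxP K (tmerge T1 T2) T1 T2 & InjP K (tmerge T1 T2)].
Proof.
move=> H1 H2.
have inM1 : forall e1, e1 \in T1 -> mergeL T2 e1 \in tmerge T1 T2.
  by move=> e1 e1T; rewrite mem_cat map_f.
have inM2 : forall f, f \in T2 -> unmatched T1 f -> f \in tmerge T1 T2.
  by move=> f fT u; rewrite mem_cat mem_filter u fT orbT.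
have DM : forall g oL oR, g \in tmerge T1 T2 -> Dec K g oL oR ->
    (exists2 e1, e1 \in T1 & [/\ oL = Some e1, oR = partner T2 e1 & g = mergeL T2 e1]) \/
    [/\ oL = None, oR = Some g, g \in T2 & unmatched T1 g].
  move=> g oL oR /(mem_merge H1 H2) [[e1 e1T Eg]|[gT u]] D.
  - left; exists e1 => //; have [D' _] := Dec_mergeL H1 H2 e1T; rewrite -Eg in D'.
    by case: (Dec_uniq D D') => -> ->.
  - right; have D' := Dec_unm H2 gT; case: (Dec_uniq D D') => -> ->; by split.
have MX : MaxP K (tmerge T1 T2) T1 T2.
  move=> e1 e2 e1T e2T E; exists (mergeL T2 e1); first exact: inM1.
  have [D _] := Dec_mergeL H1 H2 e1T; by rewrite (partner_eq H2 e2T E) in D.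
split=> //; [split; [|split]|split].
- move=> g /(mem_merge H1 H2) [[e1 e1T ->]|[gT u]].
  + have [D i] := Dec_mergeL H1 H2 e1T; by exists (Some e1), (partner T2 e1).
  + by exists None, (Some g); split=> //; apply: Dec_unm H2 gT.
- move=> e1 e1T; exists (mergeL T2 e1); first exact: inM1.
  by exists (partner T2 e1); exact: (Dec_mergeL H1 H2 e1T).
- move=> e2 e2T; case U: (unmatched T1 e2).
    by exists e2; [exact: inM2 | exists None; split=> //; apply: Dec_unm H2 e2T].
  move/negbFE: U => /hasP [e1 e1T /eqP E].
  have [g gT D] := MX e1 e2 e1T e2T (esym E).
  by exists g => //; exists (Some e1).
- move=> g g' e1 oR oR' gT g'T D D'.
  case: (DM _ _ _ gT D) => [[e e' [[E1] _ ->]]|[]] //.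
  case: (DM _ _ _ g'T D') => [[f f' [[E2] _ ->]]|[]] //.
  by rewrite -E1 -E2.
- move=> g g' e2 oL oL' gT g'T D D'.
  case: (DM _ _ _ gT D) => [[e eT [EL EP Eg]]|[EL [Eg] gT2 u]];
  case: (DM _ _ _ g'T D') => [[f fT [EL' EP' Eg']]|[EL' [Eg'] g'T2 u']].
  + have [_ Ee2] := partner_some (esym EP); have [_ Ef2] := partner_some (esym EP').
    have v := tiling_valid H1 eT; have v' := tiling_valid H1 fT.
    have Ee : e = f.
      apply: (tiling_disj H1 eT fT (hc := (lastc e, false))); first exact: last_in.
      by rewrite -Ee2 Ef2; apply: last_in.
    by rewrite Eg Eg' Ee.
  + have [_ Ee2] := partner_some (esym EP).
    by move: u'; rewrite /unmatched -Eg' => /hasP; case; exists e => //; rewrite Ee2.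
  + have [_ Ef2] := partner_some (esym EP').
    by move: u; rewrite /unmatched -Eg => /hasP; case; exists f => //; rewrite Ef2.
  + by rewrite -Eg -Eg'.
Qed.

End P15.
Import P15.

Module P16.
Set Implicit Arguments. Unset Strict Implicit. Unset Printing Implicit Defensive.
Import Order.TTheory GRing.Theory Num.Theory.
Local Open Scope ring_scope.

Lemma Corr_mem K T T1 T2 T' T1' T2' : T =i T' -> T1 =i T1' -> T2 =i T2' ->
  Corr K T T1 T2 -> Corr K T' T1' T2'.
Proof.
move=> E E1 E2 [C1 [C2 C3]]; split; [|split].
- move=> g; rewrite -E => /C1 [oL [oR [D i1 i2]]]; exists oL, oR; split=> //.
    by case: oL {D} i1 => //= e; rewrite E1.
  by case: oR {D} i2 => //= e; rewrite E2.
- move=> e1; rewrite -E1 => /C2 [g gT [oR [D i2]]]; exists g; first by rewrite -E.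
  by exists oR; split=> //; case: oR {D} i2 => //= e; rewrite E2.
- move=> e2; rewrite -E2 => /C3 [g gT [oL [D i1]]]; exists g; first by rewrite -E.
  by exists oL; split=> //; case: oL {D} i1 => //= e; rewrite E1.
Qed.

Lemma MaxP_mem K T T1 T2 T' T1' T2' : T =i T' -> T1 =i T1' -> T2 =i T2' ->
  MaxP K T T1 T2 -> MaxP K T' T1' T2'.
Proof.
move=> E E1 E2 M e1 e2; rewrite -E1 -E2 => h1 h2 h; have [g gT D] := M e1 e2 h1 h2 h.
by exists g; rewrite -?E.
Qed.

Lemma InjP_mem K T T' : T =i T' -> InjP K T -> InjP K T'.
Proof.
move=> E [IL IR]; split.
- by move=> g g' e1 oR oR'; rewrite -!E; apply: IL.
- by move=> g g' e2 oL oL'; rewrite -!E; apply: IR.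
Qed.

Lemma tr_mem v (S : seq tile) : map (tr v) (map (tr (- v)) S) =i S.
Proof.
move=> x; rewrite -map_comp (@eq_map _ _ _ id) ?map_id // => e /=.
by have := trK (- v) e; rewrite opprK.
Qed.

Lemma mem_csort_map v S x : (x \in map (tr v) (csort S)) = (x \in map (tr v) S).
Proof.
apply/mapP/mapP => [] [y yS ->]; exists y => //; move: yS; by rewrite csort_mem.
Qed.

Lemma uniq_pmap (f : tile -> option tile) (s : seq tile) : uniq s ->
  {in s &, forall x y z, f x = Some z -> f y = Some z -> x = y} -> uniq (pmap f s).
Proof.
elim: s => //= x s IH /andP [xs us] Hinj.
have sub : forall z, z \in s -> z \in x :: s by move=> z zs; rewrite inE zs orbT.
have IH' := IH us (fun x' y' hx hy => Hinj x' y' (sub _ hx) (sub _ hy)).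
case E: (f x) => [z|] //=; rewrite IH' andbT.
apply/negP; rewrite mem_pmap => /mapP [y ys Ey].
have := Hinj x y (mem_head _ _) (sub _ ys) z E (esym Ey) => Exy.
by rewrite Exy ys in xs.
Qed.

Definition ohl (o : option tile) : nat := if o is Some e then half_length e else 0%N.

Lemma tnorm_pmap (f : tile -> option tile) s : tnorm (pmap f s) = sumn [seq ohl (f x) | x <- s].
Proof. by elim: s => //= x s IH; case: (f x) => [y|] //=; rewrite /tnorm /= -IH. Qed.

Lemma Dec_hl K g oL oR : Dec K g oL oR -> half_length g = (ohl oL + ohl oR)%N.
Proof.
case: oL oR => [e1|] [e2|] //.
- move=> D; have [h1 h2 h3 s1 s2] := Dec_SS D.
  have [v1 _] := Dec_vL D; have [_ m1] := valid_dyck v1.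
  have ev := hgt_even m1 (leqnn _).
  rewrite /half_length h2 size_cat.
  by rewrite divnDl // dvdn2 ev.
- by case=> _ _ ->; rewrite addn0.
- by case=> _ _ ->.
Qed.

Lemma tnorm_split K T : (forall g, g \in T -> Dec K g (cutL K g) (cutR K g)) ->
  tnorm T = (tnorm (pmap (cutL K) T) + tnorm (pmap (cutR K) T))%N.
Proof.
rewrite !tnorm_pmap; elim: T => //= g T IH H.
rewrite /tnorm /= in IH *; rewrite IH; last by move=> x xT; apply: H; rewrite inE xT orbT.
rewrite (Dec_hl (H g (mem_head _ _))); lia.
Qed.

Lemma tnorm_tr v S : tnorm (map (tr v) S) = tnorm S.
Proof. by rewrite /tnorm -map_comp. Qed.

End P16.
Import P16.

Module P17.
Set Implicit Arguments. Unset Strict Implicit. Unset Printing Implicit Defensive.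
Import Order.TTheory GRing.Theory Num.Theory.
Local Open Scope ring_scope.

Lemma main_aux (n1 n2 : nat) (lam1 lam2 : seq bool) (a b i : nat)
    (mu1 mu2 : seq bool) :
  is_dyck n1 lam1 -> is_dyck n2 lam2 ->
  inL lam1 a i mu1 -> inL lam2 i b mu2 ->
  exists phi : TD (lam1 ++ lam2) a (mu1 ++ mu2) -> TD lam1 a mu1 * TD lam2 i mu2,
    bijective phi /\
    forall T, tnorm (sval T) = (tnorm (sval (phi T).1) + tnorm (sval (phi T).2))%N.
Proof.
move=> D1 D2 L1 L2.
have [s1 [Dn1 Du1]] := is_dyckP D1.
have [s2 [Dn2 Du2]] := is_dyckP D2.
case: L1 => sm1 [Lb1 Le1]; case: L2 => sm2 [Lb2 Le2].
set K := size lam1.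
have hl1 : hgt lam1 K = 0%R by rewrite /hgt Du1 subrr.
have HK : hgt (lam1 ++ lam2) K = 0%R by rewrite hgt_cat1.
have Hnn : forall t, (0 <= hgt (lam1 ++ lam2) t)%R.
  move=> t; case: (leqP t K) => h.
    by rewrite hgt_cat1 //; have := Dn1 t; rewrite /hgt; lia.
  have -> : t = (K + (t - K))%N by lia.
  by rewrite hgt_cat2 hl1 add0r; have := Dn2 (t - K)%N; rewrite /hgt; lia.
have Hev : ~~ odd K by rewrite /K s1 oddM.
pose v : int := n1%:Z.
have Kv : K%:Z = (2 * v)%R by rewrite /K s1 /v; lia.
pose R := hc_in (lam1 ++ lam2) (mu1 ++ mu2) a.
have HL : forall hc, hc_in lam1 mu1 a hc = PL R K%:Z hc.
  by move=> hc; rewrite /PL /R; apply: hc_left.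
have HR : forall hc, hc_in lam2 mu2 i (trh (- v) hc) = PR R K%:Z hc.
  by move=> hc; rewrite /PR /R; apply: hc_right.
have DC : forall T, tiling R T -> forall g, g \in T -> Dec K%:Z g (cutL K%:Z g) (cutR K%:Z g).
  move=> T HT g gT; apply: Dec_cut; first exact: tiling_valid HT gT.
  move=> h1 h2; apply: (cross_ret HK Hnn Hev HT gT); rewrite /ck; lia.
pose F1 T := csort (pmap (cutL K%:Z) T).
pose F2 T := csort (map (tr (- v)) (pmap (cutR K%:Z) T)).
pose G S1 S2 := csort (tmerge S1 (map (tr v) S2)).
have symm : forall (S S' : seq tile), S =i S' -> S' =i S by move=> S S' E x; rewrite E.
have TH1 : forall T, tiling R T -> [/\ Corr K%:Z T (pmap (cutL K%:Z) T) (pmap (cutR K%:Z) T),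
     tiling (PL R K%:Z) (pmap (cutL K%:Z) T) & tiling (PR R K%:Z) (pmap (cutR K%:Z) T)].
  move=> T HT; have C := Corr_cut (DC _ HT); split=> //; [exact: Th1L C HT | exact: Th1R C HT].
have P1 : forall T, is_tdtiling (lam1 ++ lam2) a (mu1 ++ mu2) T -> is_tdtiling lam1 a mu1 (F1 T).
  move=> T [cT HT]; split; first exact: canonical_csort.
  have [_ H1 _] := TH1 T HT.
  apply: (tiling_ext (P := PL R K%:Z)); first by move=> hc; rewrite HL.
  by apply: (tiling_mem _ H1) => x; rewrite csort_mem.
have P2 : forall T, is_tdtiling (lam1 ++ lam2) a (mu1 ++ mu2) T -> is_tdtiling lam2 i mu2 (F2 T).
  move=> T [cT HT]; split; first exact: canonical_csort.
  have [_ _ H2] := TH1 T HT.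
  have := tiling_tr (Q := hc_in lam2 mu2 i) HR H2.
  by apply: tiling_mem => x; rewrite csort_mem.
have TRv : forall S2, tiling (hc_in lam2 mu2 i) S2 -> tiling (PR R K%:Z) (map (tr v) S2).
  move=> S2 H2; apply: (tiling_tr (P := hc_in lam2 mu2 i)) H2 => h.
  rewrite -HR; congr hc_in; case: h => [[x y] bb]; rewrite /trh /trc /=; congr (_, _, _); lia.
have P3 : forall S1 S2, is_tdtiling lam1 a mu1 S1 -> is_tdtiling lam2 i mu2 S2 ->
    is_tdtiling (lam1 ++ lam2) a (mu1 ++ mu2) (G S1 S2).
  move=> S1 S2 [c1 H1] [c2 H2]; split; first exact: canonical_csort.
  have H1' : tiling (PL R K%:Z) S1 by apply: (tiling_ext (P := hc_in lam1 mu1 a)) H1 => hc; rewrite HL.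
  have H2' := TRv _ H2.
  have [C M I] := merge_props H1' H2'.
  have := Th2 HK C M I H1' H2'.
  by apply: tiling_mem => x; rewrite csort_mem.
have sig_eq : forall (l : seq bool) (a' : nat) (m : seq bool) (X Y : TD l a' m), sval X = sval Y -> X = Y.
  by move=> l a' m X Y; apply: eq_sig_hprop => x p q; apply: proof_irrelevance.
pose phi := fun T : TD (lam1 ++ lam2) a (mu1 ++ mu2) =>
  (exist _ (F1 (sval T)) (P1 _ (svalP T)) : TD lam1 a mu1, exist _ (F2 (sval T)) (P2 _ (svalP T)) : TD lam2 i mu2).
pose psi := fun p : TD lam1 a mu1 * TD lam2 i mu2 =>
  exist _ (G (sval p.1) (sval p.2)) (P3 _ _ (svalP p.1) (svalP p.2)) : TD (lam1 ++ lam2) a (mu1 ++ mu2).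
exists phi; split.
- exists psi.
  + move=> [T [cT HT]]; apply: sig_eq; rewrite /= /G /F1 /F2.
    have [C H1 H2] := TH1 T HT.
    have E1 : pmap (cutL K%:Z) T =i csort (pmap (cutL K%:Z) T) by move=> x; rewrite csort_mem.
    have E2 : pmap (cutR K%:Z) T =i map (tr v) (csort (map (tr (- v)) (pmap (cutR K%:Z) T))).
      by move=> x; rewrite mem_csort_map tr_mem.
    have C' := Corr_mem (fun x => erefl) E1 E2 C.
    have M' := MaxP_mem (fun x => erefl) E1 E2 (Th1Max C HT).
    have I := Th1Inj C HT.
    have HA1 := tiling_mem E1 H1.
    have HA2 := tiling_mem E2 H2.
    have [CM MM IM] := merge_props HA1 HA2.
    apply: canonical_eq; [exact: canonical_csort | exact: cT |] => x.
    rewrite csort_mem; apply/idP/idP => hx.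
    * exact: (Corr_eqT CM C' MM M' IM I).
    * exact: (Corr_eqT C' CM M' MM I IM).
  + move=> [[S1 [c1 H1]] [S2 [c2 H2]]].
    have HTm := (P3 _ _ (conj c1 H1) (conj c2 H2)).2.
    have [Cc _ _] := TH1 _ HTm.
    have H1' : tiling (PL R K%:Z) S1 by apply: (tiling_ext (P := hc_in lam1 mu1 a)) H1 => hc; rewrite HL.
    have H2' := TRv _ H2.
    have [CM _ _] := merge_props H1' H2'.
    have CM' := Corr_mem (fun x => esym (csort_mem _ x)) (fun x => erefl) (fun x => erefl) CM.
    have [I1 I2] := Corr_eqT1 CM' Cc.
    have [J1 J2] := Corr_eqT1 Cc CM'.
    congr pair; apply: sig_eq; rewrite /= /F1 /F2 /G.
    * apply: canonical_eq; [exact: canonical_csort | exact: c1 |] => x.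
      rewrite csort_mem; apply/idP/idP; [exact: J1 | exact: I1].
    * apply: canonical_eq; [exact: canonical_csort | exact: c2 |] => x.
      have E : pmap (cutR K%:Z) (csort (tmerge S1 [seq tr v i | i <- S2])) =i map (tr v) S2.
        by move=> y; apply/idP/idP; [exact: J2 | exact: I2].
      rewrite csort_mem (@eq_mem_map _ _ (tr (- v)) _ _ E).
      by have := tr_mem (- v) S2; rewrite opprK => ->.
- move=> [T [cT HT]] /=.
  have [C H1 H2] := TH1 T HT; have [IL IR] := Th1Inj C HT.
  have uT := canonical_uniq cT.
  have u1 : uniq (pmap (cutL K%:Z) T).
    apply: (uniq_pmap (f := cutL K%:Z) uT) => x y xT yT z Ex Ey.
    have Dx := DC _ HT x xT; have Dy := DC _ HT y yT; rewrite Ex in Dx; rewrite Ey in Dy.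
    exact: (IL _ _ _ _ _ xT yT Dx Dy).
  have u2 : uniq (map (tr (- v)) (pmap (cutR K%:Z) T)).
    rewrite (map_inj_uniq (@tr_inj _)); apply: (uniq_pmap (f := cutR K%:Z) uT) => x y xT yT z Ex Ey.
    have Dx := DC _ HT x xT; have Dy := DC _ HT y yT; rewrite Ex in Dx; rewrite Ey in Dy.
    exact: (IR _ _ _ _ _ xT yT Dx Dy).
  rewrite /F1 /F2 !tnorm_csort // tnorm_tr; exact: tnorm_split (DC _ HT).
Qed.

End P17.
Import P17.

Theorem lemma3p6 (n1 n2 : nat) (lam1 lam2 : seq bool) (a b i : nat)
    (mu1 mu2 : seq bool) :
  is_dyck n1 lam1 -> is_dyck n2 lam2 ->
  inL lam1 a i mu1 -> inL lam2 i b mu2 ->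
  exists phi : TD (lam1 ++ lam2) a (mu1 ++ mu2) -> TD lam1 a mu1 * TD lam2 i mu2,
    bijective phi /\
    forall T, tnorm (sval T) = (tnorm (sval (phi T).1) + tnorm (sval (phi T).2))%N.
Proof. exact: main_aux. Qed.
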